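(* Let $W=\partial_u+v^p\partial_v$ and, for a smooth function $\phi$ on the interior, let $\tilde K^W(\phi)=-\frac{2}{r}(v^p+1)\,\partial_v\phi\,\partial_u\phi$. Fix $u_{\text{✄}}$ in the range of $u_\gamma$. There exist constants $\delta_1=\delta_1(\epsilon)$ and $\delta_2=\delta_2(v_* )>0$, independent of $\phi$, with $\delta_1\to0$ as $\epsilon\to0$ and $\delta_2\to0$ as $v_*\to\infty$, such that for every smooth $\phi$, every $v_*\ge v_\gamma(u_{\text{✄}})$, every $\hat v>v_*$ and all $u_1<u_2$ with $u_{\text{✄}}\le u_1$ and $0<u_2-u_1\le\epsilon$, setting $\mathcal R_{V_1}=[u_1,u_2]\times[v_*,\hat v]\times\mathbb S^2$, $$\int_{\mathcal R_{V_1}}|\tilde K^W(\phi)|\,dVol\le\delta_1\sup_{u_1\le\bar u\le u_2}F^W_{u=\bar u}[v_*,\hat v]+\delta_2\sup_{v_*\le\bar v\le\hat v}F^W_{v=\bar v}[u_1,u_2].$$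
   Context: Fix $M>|e|>0$ and let $r_\pm=M\pm\sqrt{M^2-e^2}$. The black hole interior of the maximal globally hyperbolic development $(\mathcal M,g)$ of two-ended subextremal Reissner–Nordström data is covered by Eddington–Finkelstein double null coordinates $(u,v)\in\mathbb R^2$ together with spherical coordinates $(\theta,\vartheta)\in\mathbb S^2$ ($\vartheta$ the azimuthal angle), in which $g=-\Omega^2(u,v)\,du\,dv+r^2(u,v)(d\theta^2+\sin^2\theta\,d\vartheta^2)$, where $r\in(r_-,r_+)$, $\Omega^2=-(1-\frac{2M}{r}+\frac{e^2}{r^2})>0$, $\partial_u r=\partial_v r=-\Omega^2/2$, and $\frac{\partial_u\Omega}{\Omega}=\frac{\partial_v\Omega}{\Omega}=\frac{1}{2r^2}(M-\frac{e^2}{r})$. The function $r$ depends only on $r^*:=(u+v)/2$ and decreases from $r_+$ (as $r^*\to-\infty$) to $r_-$ (as $r^*\to+\infty$). For a function $\psi$, $|\nabla\!\!\!/\,\psi|^2=r^{-2}[(\partial_\theta\psi)^2+\sin^{-2}\theta(\partial_\vartheta\psi)^2]$ and $d\sigma$ is the standard measure on the unit sphere. Fix $p>1$. Fix $r_{blue}\in(r_-,r_+)$ so close to $r_-$ that $M-e^2/r<0$ for $r_-<r\le r_{blue}$ and $r^*_{blue}>0$, where $r^*_{blue}$ is the value of $r^*$ on $\{r=r_{blue}\}$; fix $\beta>0$ with $-\partial_u\Omega/\Omega=-\partial_v\Omega/\Omega\ge\beta$ on $\{r_-<r\le r_{blue}\}$. Fix $\alpha>\max\{1,(p+1)/\beta\}$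 with $\alpha(2-\log 2\alpha)>2r^*_{blue}+1$. Let $H(u,v)=u+v-\alpha\log v-2r^*_{blue}$ and $\gamma=\{H=0,\ v>2\alpha\}\times\mathbb S^2$; for $v>2\alpha$ let $u_\gamma(v)$ be the unique $u$ with $(u,v)\in\gamma$, and for $u$ in the range of $u_\gamma$ let $v_\gamma(u)$ be the corresponding $v$. For a vector field $X=X^u\partial_u+X^v\partial_v$ the null fluxes are $F^X_{u=\bar u}[v_1,v_2]=\int_{\mathbb S^2}\int_{v_1}^{v_2}\big[X^v(\partial_v\phi)^2+\frac{\Omega^2}{4}X^u|\nabla\!\!\!/\phi|^2\big](\bar u,v,\cdot)\,r^2\,dv\,d\sigma$ and $F^X_{v=\bar v}[u_1,u_2]=\int_{\mathbb S^2}\int_{u_1}^{u_2}\big[X^u(\partial_u\phi)^2+\frac{\Omega^2}{4}X^v|\nabla\!\!\!/\phi|^2\big](u,\bar v,\cdot)\,r^2\,du\,d\sigma$. The spacetime volume form is $dVol=\frac{r^2\Omega^2}{2}\,du\,dv\,d\sigma$. *)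

(* Defs.v *)
From Stdlib Require Import Reals.
Open Scope R_scope.

Definition RInt (f : R -> R) (a b I : R) : Prop :=
  exists pr : Riemann_integrable f a b, RiemannInt pr = I.

(* I = \int_{S^2} h d\sigma,  d\sigma = sin th d th d ph, th in [0,pi], ph in [0,2 pi] *)
Definition SphInt (h : R -> R -> R) (I : R) : Prop :=
  exists G : R -> R,
    (forall th, 0 <= th <= PI -> RInt (fun ph => h th ph * sin th) 0 (2 * PI) (G th))
    /\ RInt G 0 PI I.

Definition FluxInt (h : R -> R -> R -> R) (a b I : R) : Prop :=
  exists J : R -> R -> R,
    (forall th ph, 0 <= th <= PI -> 0 <= ph <= 2 * PI ->
        RInt (fun s => h s th ph) a b (J th ph))
    /\ SphInt J I.

Definition RectInt (h : R -> R -> R -> R -> R) (u1 u2 v1 v2 I : R) : Prop :=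
  exists G : R -> R,
    (forall u, u1 <= u <= u2 ->
       exists K : R -> R,
         (forall v, v1 <= v <= v2 -> SphInt (h u v) (K v))
         /\ RInt K v1 v2 (G u))
    /\ RInt G u1 u2 I.

Definition lift5 (Phi : R -> R -> R -> R -> R -> R) (x : nat -> R) : R :=
  Phi (x 0%nat) (x 1%nat) (x 2%nat) (x 3%nat) (x 4%nat).

Definition upd (x : nat -> R) (i : nat) (t : R) : nat -> R :=
  fun j => if Nat.eqb j i then t else x j.

Definition cont5 (f : (nat -> R) -> R) : Prop :=
  forall x eps, 0 < eps -> exists d, 0 < d /\
    forall y, (forall j, (j < 5)%nat -> Rabs (y j - x j) < d) ->
              (forall j, (5 <= j)%nat -> y j = x j) ->
              Rabs (f y - f x) < eps.

Fixpoint Ck5 (k : nat) (f : (nat -> R) -> R) : Prop :=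
  cont5 f /\
  match k with
  | O => True
  | S k' => forall i, (i < 5)%nat -> exists g : (nat -> R) -> R,
              (forall x, derivable_pt_lim (fun t => f (upd x i t)) (x i) (g x))
              /\ Ck5 k' g
  end.

Definition smooth5 (Phi : R -> R -> R -> R -> R -> R) : Prop :=
  forall k, Ck5 k (lift5 Phi).

(* A smooth function on the interior R^2_{(u,v)} x S^2, written in the
   coordinates (u,v,theta,vartheta): restriction of a smooth Phi on R^2 x R^3. *)
Definition psiOf (Phi : R -> R -> R -> R -> R -> R) (u v th ph : R) : R :=
  Phi u v (sin th * cos ph) (sin th * sin ph) (cos th).

Definition partials (Phi : R -> R -> R -> R -> R -> R)
  (du dv dth dph : R -> R -> R -> R -> R) : Prop :=
  forall u v th ph,
    derivable_pt_lim (fun t => psiOf Phi t v th ph) u (du u v th ph) /\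
    derivable_pt_lim (fun t => psiOf Phi u t th ph) v (dv u v th ph) /\
    derivable_pt_lim (fun t => psiOf Phi u v t ph) th (dth u v th ph) /\
    derivable_pt_lim (fun t => psiOf Phi u v th t) ph (dph u v th ph).

Definition rplus (M e : R) : R := M + sqrt (M ^ 2 - e ^ 2).
Definition rminus (M e : R) : R := M - sqrt (M ^ 2 - e ^ 2).

(* Rf gives r as a function of r^* = (u+v)/2 : values in (r_-,r_+),
   dr/dr^* = -Omega^2 = 1 - 2M/r + e^2/r^2 (so d_u r = d_v r = -Omega^2/2),
   r -> r_+ as r^* -> -infty, r -> r_- as r^* -> +infty. *)
Definition RN_rfun (M e : R) (Rf : R -> R) : Prop :=
  (forall s, rminus M e < Rf s < rplus M e) /\
  (forall s, derivable_pt_lim Rf s (1 - 2 * M / Rf s + e ^ 2 / (Rf s) ^ 2)) /\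
  (forall eps, 0 < eps -> exists S, forall s, s <= S -> Rabs (Rf s - rplus M e) < eps) /\
  (forall eps, 0 < eps -> exists S, forall s, S <= s -> Rabs (Rf s - rminus M e) < eps).

Definition rr (Rf : R -> R) (u v : R) : R := Rf ((u + v) / 2).

Definition Om2 (M e : R) (Rf : R -> R) (u v : R) : R :=
  - (1 - 2 * M / rr Rf u v + e ^ 2 / (rr Rf u v) ^ 2).

Definition angGrad2 (Rf : R -> R) (dth dph : R -> R -> R -> R -> R) (u v th ph : R) : R :=
  / (rr Rf u v) ^ 2 * ((dth u v th ph) ^ 2 + / (sin th) ^ 2 * (dph u v th ph) ^ 2).

(* u_gamma(v) : the u with H(u,v) = u + v - alpha log v - 2 r^*_blue = 0 *)
Definition u_gamma (alpha rsb v : R) : R := 2 * rsb + alpha * ln v - v.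

Definition KtildeW (p : R) (Rf : R -> R) (du dv : R -> R -> R -> R -> R) (u v th ph : R) : R :=
  - (2 / rr Rf u v) * (Rpower v p + 1) * dv u v th ph * du u v th ph.

(* integrand of F^W_{u = ub}: [W^v (d_v phi)^2 + Omega^2/4 W^u |nabla phi|^2] r^2 *)
Definition fluxU_integrand (M e p : R) (Rf : R -> R) (du dv dth dph : R -> R -> R -> R -> R)
  (ub : R) (v th ph : R) : R :=
  (Rpower v p * (dv ub v th ph) ^ 2 + Om2 M e Rf ub v / 4 * 1 * angGrad2 Rf dth dph ub v th ph)
  * (rr Rf ub v) ^ 2.

(* integrand of F^W_{v = vb}: [W^u (d_u phi)^2 + Omega^2/4 W^v |nabla phi|^2] r^2 *)
Definition fluxV_integrand (M e p : R) (Rf : R -> R) (du dv dth dph : R -> R -> R -> R -> R)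
  (vb : R) (u th ph : R) : R :=
  (1 * (du u vb th ph) ^ 2 + Om2 M e Rf u vb / 4 * Rpower vb p * angGrad2 Rf dth dph u vb th ph)
  * (rr Rf u vb) ^ 2.

(* |tilde K^W| times the density of dVol = r^2 Omega^2 / 2 du dv dsigma *)
Definition bulk_integrand (M e p : R) (Rf : R -> R) (du dv : R -> R -> R -> R -> R)
  (u v th ph : R) : R :=
  Rabs (KtildeW p Rf du dv u v th ph) * ((rr Rf u v) ^ 2 * Om2 M e Rf u v / 2).

(* Main.v *)
Require Import Defs.
From Stdlib Require Import Reals Lra Psatz Classical ClassicalEpsilon FunctionalExtensionality Arith.
From Coquelicot Require Import Coquelicot.
Open Scope R_scope.

Definition jc4 (f : R -> R -> R -> R -> R) : Prop :=
  forall a b c d eps, 0 < eps -> exists del, 0 < del /\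
    forall a' b' c' d', Rabs (a' - a) < del -> Rabs (b' - b) < del ->
      Rabs (c' - c) < del -> Rabs (d' - d) < del ->
      Rabs (f a' b' c' d' - f a b c d) < eps.

Lemma jc4_const k : jc4 (fun _ _ _ _ => k).
Proof. intros a b c d eps he; exists 1; split; [lra|]; intros;
  unfold Rminus; rewrite Rplus_opp_r, Rabs_R0; lra. Qed.

Lemma jc4_p0 : jc4 (fun a _ _ _ => a).
Proof. intros a b c d eps he; exists eps; split; [lra|]; intros; lra. Qed.
Lemma jc4_p1 : jc4 (fun _ b _ _ => b).
Proof. intros a b c d eps he; exists eps; split; [lra|]; intros; lra. Qed.
Lemma jc4_p2 : jc4 (fun _ _ c _ => c).
Proof. intros a b c d eps he; exists eps; split; [lra|]; intros; lra. Qed.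
Lemma jc4_p3 : jc4 (fun _ _ _ d => d).
Proof. intros a b c d eps he; exists eps; split; [lra|]; intros; lra. Qed.

Lemma jc4_comp F e0 e1 e2 e3 : jc4 F -> jc4 e0 -> jc4 e1 -> jc4 e2 -> jc4 e3 ->
  jc4 (fun a b c d => F (e0 a b c d) (e1 a b c d) (e2 a b c d) (e3 a b c d)).
Proof.
  intros HF H0 H1 H2 H3 a b c d eps he.
  destruct (HF (e0 a b c d) (e1 a b c d) (e2 a b c d) (e3 a b c d) eps he) as [del [hd HD]].
  destruct (H0 a b c d del hd) as [d0 [hd0 HD0]].
  destruct (H1 a b c d del hd) as [d1 [hd1 HD1]].
  destruct (H2 a b c d del hd) as [d2 [hd2 HD2]].
  destruct (H3 a b c d del hd) as [d3 [hd3 HD3]].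
  exists (Rmin (Rmin d0 d1) (Rmin d2 d3)); split.
  { repeat apply Rmin_pos; auto. }
  intros a' b' c' d' ha hb hc hdd.
  assert (m1 := Rmin_l (Rmin d0 d1) (Rmin d2 d3)).
  assert (m2 := Rmin_r (Rmin d0 d1) (Rmin d2 d3)).
  assert (m3 := Rmin_l d0 d1). assert (m4 := Rmin_r d0 d1).
  assert (m5 := Rmin_l d2 d3). assert (m6 := Rmin_r d2 d3).
  apply HD; [apply HD0|apply HD1|apply HD2|apply HD3]; lra.
Qed.

Lemma jc4_plus2 : jc4 (fun x y _ _ => x + y).
Proof.
  intros a b c d eps he; exists (eps/2); split; [lra|]; intros a' b' c' d' h1 h2 _ _.
  replace (a' + b' - (a + b)) with ((a' - a) + (b' - b)) by ring.
  eapply Rle_lt_trans; [apply Rabs_triang|]; lra.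
Qed.

Lemma jc4_mult2 : jc4 (fun x y _ _ => x * y).
Proof.
  intros a b c d eps he.
  set (K := Rabs a + Rabs b + 1).
  assert (hK : 0 < K) by (unfold K; pose proof (Rabs_pos a); pose proof (Rabs_pos b); lra).
  exists (Rmin 1 (eps / (4 * K))); split.
  { apply Rmin_pos; [lra|]. apply Rdiv_lt_0_compat; lra. }
  intros a' b' c' d' h1 h2 _ _.
  assert (m1 := Rmin_l 1 (eps / (4 * K))). assert (m2 := Rmin_r 1 (eps / (4 * K))).
  replace (a' * b' - a * b) with ((a' - a) * b' + a * (b' - b)) by ring.
  eapply Rle_lt_trans; [apply Rabs_triang|]. rewrite !Rabs_mult.
  assert (hb' : Rabs b' <= Rabs b + 1).
  { replace b' with (b + (b' - b)) by ring. eapply Rle_trans; [apply Rabs_triang|]; lra. }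
  assert (e1 : Rabs (a' - a) * Rabs b' <= eps / (4 * K) * K).
  { apply Rmult_le_compat; try apply Rabs_pos; unfold K in *; try lra.
    pose proof (Rabs_pos a); lra. }
  assert (e2 : Rabs a * Rabs (b' - b) <= K * (eps / (4 * K))).
  { apply Rmult_le_compat; try apply Rabs_pos; unfold K in *; try lra.
    pose proof (Rabs_pos b); lra. }
  assert (e3 : eps / (4 * K) * K = eps / 4) by (field; lra).
  assert (e4 : K * (eps / (4 * K)) = eps / 4) by (field; lra).
  apply Rle_lt_trans with (eps/(4*K)*K + K*(eps/(4*K))).
  { apply Rplus_le_compat; auto. }
  rewrite e3, e4; lra.
Qed.

Lemma jc4_plus F G : jc4 F -> jc4 G -> jc4 (fun a b c d => F a b c d + G a b c d).
Proof. intros; apply (jc4_comp (fun x y _ _ => x + y) _ _ (fun _ _ _ _ => 0) (fun _ _ _ _ => 0)); auto using jc4_plus2, jc4_const. Qed.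
Lemma jc4_mult F G : jc4 F -> jc4 G -> jc4 (fun a b c d => F a b c d * G a b c d).
Proof. intros; apply (jc4_comp (fun x y _ _ => x * y) _ _ (fun _ _ _ _ => 0) (fun _ _ _ _ => 0)); auto using jc4_mult2, jc4_const. Qed.

Lemma cpt_eps f x : continuity_pt f x -> forall eps, 0 < eps -> exists d, 0 < d /\
  forall y, Rabs (y - x) < d -> Rabs (f y - f x) < eps.
Proof.
  intros H eps he. destruct (H eps he) as [d [hd Hd]]. exists d; split; auto.
  intros y hy. destruct (Req_dec y x) as [->|ne].
  - unfold Rminus; rewrite Rplus_opp_r, Rabs_R0; auto.
  - apply (Hd y). split; [split; [exact I| auto]| exact hy].
Qed.

Lemma eps_cpt f x : (forall eps, 0 < eps -> exists d, 0 < d /\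
  forall y, Rabs (y - x) < d -> Rabs (f y - f x) < eps) -> continuity_pt f x.
Proof.
  intros H eps he. destruct (H eps he) as [d [hd Hd]]. exists d; split; auto.
  intros y [_ hy]. apply Hd. exact hy.
Qed.

Lemma jc4_fun1 f F : (forall x, continuity_pt f x) -> jc4 F -> jc4 (fun a b c d => f (F a b c d)).
Proof.
  intros Hf HF. apply (jc4_comp (fun x _ _ _ => f x) _ (fun _ _ _ _ => 0) (fun _ _ _ _ => 0) (fun _ _ _ _ => 0)); auto using jc4_const.
  intros a b c d eps he. destruct (cpt_eps f a (Hf a) eps he) as [del [hd H]].
  exists del; split; auto.
Qed.

Lemma jc4_cont0 F b c d x : jc4 F -> continuity_pt (fun t => F t b c d) x.
Proof.
  intros H. apply eps_cpt. intros eps he. destruct (H x b c d eps he) as [del [hd D]].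
  exists del; split; auto. intros y hy. apply D; auto; unfold Rminus; rewrite Rplus_opp_r, Rabs_R0; auto.
Qed.

Lemma jc4_continuous0 F b c d x : jc4 F -> continuous (fun t => F t b c d) x.
Proof. intros H. apply continuity_pt_filterlim. apply jc4_cont0; auto. Qed.

Lemma jc4_exRInt0 F b c d lo hi : jc4 F -> ex_RInt (fun t => F t b c d) lo hi.
Proof. intros H. apply (ex_RInt_continuous (V:=R_CompleteNormedModule)). intros; apply jc4_continuous0; auto. Qed.

Lemma jc4_unif F lo hi b c d eta : jc4 F -> 0 < eta -> exists del, 0 < del /\
  forall t b' c' d', lo <= t <= hi -> Rabs (b' - b) < del -> Rabs (c' - c) < del ->
     Rabs (d' - d) < del -> Rabs (F t b' c' d' - F t b c d) < eta.
Proof.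
  intros HF he.
  assert (Hex : forall t, exists del : posreal, forall a' b' c' d', Rabs (a' - t) < del -> Rabs (b' - b) < del ->
      Rabs (c' - c) < del -> Rabs (d' - d) < del -> Rabs (F a' b' c' d' - F t b c d) < eta/2).
  { intros t. destruct (HF t b c d (eta/2)) as [del [hd D]]; [lra|].
    exists (mkposreal del hd); simpl; auto. }
  set (delta := fun t => proj1_sig (constructive_indefinite_description _ (Hex t))).
  assert (Hdel : forall t a' b' c' d', Rabs (a' - t) < delta t -> Rabs (b' - b) < delta t ->
      Rabs (c' - c) < delta t -> Rabs (d' - d) < delta t -> Rabs (F a' b' c' d' - F t b c d) < eta/2).
  { intros t. unfold delta. destruct (constructive_indefinite_description _ (Hex t)) as [x Hx]; simpl; auto. }
  destruct (compactness_value_1d lo hi delta) as [d0 Hd0].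
  exists d0; split; [apply cond_pos|].
  intros t b' c' d' ht hb hc hd.
  apply Rnot_le_lt; intro Hc. apply (Hd0 t ht). intros [t0 [ht0 [h1 h2]]].
  assert (X1 := Hdel t0 t b' c' d' h1 ltac:(lra) ltac:(lra) ltac:(lra)).
  assert (X2 := Hdel t0 t b c d h1).
  rewrite !Rminus_diag, Rabs_R0 in X2. specialize (X2 (cond_pos _) (cond_pos _) (cond_pos _)).
  assert (Rabs (F t b' c' d' - F t b c d) <= Rabs (F t b' c' d' - F t0 b c d) + Rabs (F t b c d - F t0 b c d)).
  { replace (F t b' c' d' - F t b c d) with ((F t b' c' d' - F t0 b c d) - (F t b c d - F t0 b c d)) by ring.
    eapply Rle_trans; [apply Rabs_triang|]. rewrite Rabs_Ropp. lra. }
  lra.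
Qed.

Lemma RInt_minus_R f g lo hi : ex_RInt f lo hi -> ex_RInt g lo hi ->
  RInt (fun t => f t - g t) lo hi = RInt f lo hi - RInt g lo hi.
Proof. intros; apply (RInt_minus (V:=R_CompleteNormedModule)); auto. Qed.
Lemma RInt_plus_R f g lo hi : ex_RInt f lo hi -> ex_RInt g lo hi ->
  RInt (fun t => f t + g t) lo hi = RInt f lo hi + RInt g lo hi.
Proof. intros; apply (RInt_plus (V:=R_CompleteNormedModule)); auto. Qed.
Lemma RInt_scal_R f k lo hi : ex_RInt f lo hi ->
  RInt (fun t => k * f t) lo hi = k * RInt f lo hi.
Proof. intros; apply (RInt_scal (V:=R_CompleteNormedModule)); auto. Qed.

Lemma jc4_int0 F lo hi : lo <= hi -> jc4 F -> jc4 (fun a b c d => RInt (fun t => F t b c d) lo hi).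
Proof.
  intros hlh HF a b c d eps he.
  destruct (jc4_unif F lo hi b c d (eps / (hi - lo + 1)) HF) as [del [hd D]].
  { apply Rdiv_lt_0_compat; lra. }
  exists del; split; auto. intros a' b' c' d' _ hb hc hdd.
  rewrite <- RInt_minus_R by (apply jc4_exRInt0; auto).
  eapply Rle_lt_trans.
  { apply (abs_RInt_le_const _ lo hi (eps / (hi - lo + 1))); auto.
    - apply (ex_RInt_minus (V:=R_CompleteNormedModule)); apply jc4_exRInt0; auto.
    - intros t ht. apply Rlt_le. apply D; auto. }
  apply Rlt_le_trans with ((hi - lo + 1) * (eps / (hi - lo + 1))).
  { apply Rmult_lt_compat_r; [apply Rdiv_lt_0_compat|]; lra. }
  right; field; lra.
Qed.

Lemma jc4_sw01 F : jc4 F -> jc4 (fun a b c d => F b a c d).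
Proof. intros H; apply (jc4_comp F); auto using jc4_p0, jc4_p1, jc4_p2, jc4_p3. Qed.
Lemma jc4_sw02 F : jc4 F -> jc4 (fun a b c d => F c b a d).
Proof. intros H; apply (jc4_comp F); auto using jc4_p0, jc4_p1, jc4_p2, jc4_p3. Qed.
Lemma jc4_sw03 F : jc4 F -> jc4 (fun a b c d => F d b c a).
Proof. intros H; apply (jc4_comp F); auto using jc4_p0, jc4_p1, jc4_p2, jc4_p3. Qed.

Lemma jc4_int0' F lo hi : jc4 F -> jc4 (fun a b c d => RInt (fun t => F t b c d) lo hi).
Proof.
  intros HF. destruct (Rle_dec lo hi). { apply jc4_int0; auto. }
  assert (H := jc4_int0 F hi lo ltac:(lra) HF).
  assert (E : (fun a b c d : R => RInt (fun t => F t b c d) lo hi) =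
              (fun a b c d => (-1) * RInt (fun t => F t b c d) hi lo)).
  { repeat (apply functional_extensionality; intro). rewrite <- opp_RInt_swap.
    - simpl. unfold opp; simpl. ring.
    - apply jc4_exRInt0; auto. }
  rewrite E. apply jc4_mult; auto using jc4_const.
Qed.

Lemma jc4_continuous1 F a c d x : jc4 F -> continuous (fun t => F a t c d) x.
Proof. intros H. apply (jc4_continuous0 (fun a b c d => F b a c d)). apply jc4_sw01; auto. Qed.

Lemma jc4_c2d F c0 d0 x y : jc4 F -> continuity_2d_pt (fun u v => F u v c0 d0) x y.
Proof.
  intros H eps. destruct (H x y c0 d0 eps (cond_pos eps)) as [del [hd D]].
  exists (mkposreal del hd); simpl. intros u v hu hv. apply D; auto;
  unfold Rminus; rewrite Rplus_opp_r, Rabs_R0; auto.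
Qed.

Lemma RInt_point_R f a : RInt f a a = 0.
Proof. apply (RInt_point (V:=R_CompleteNormedModule)). Qed.

Lemma zero_deriv_const (h : R -> R) : (forall z, is_derive h z 0) -> forall x y, h x = h y.
Proof.
  intros H x y.
  assert (D : forall z, derivable_pt_lim h z 0).
  { intros z. apply is_derive_Reals. apply H. }
  destruct (Rtotal_order x y) as [l|[e|g]].
  - destruct (MVT_cor2 h (fun _ => 0) x y l (fun c _ => D c)) as [c [hc _]]. lra.
  - subst; auto.
  - destruct (MVT_cor2 h (fun _ => 0) y x g (fun c _ => D c)) as [c [hc _]]. lra.
Qed.

Lemma int_par_cont (G : R -> R -> R) lo hi : jc4 (fun a b _ _ => G a b) ->
  jc4 (fun b _ _ _ => RInt (fun t => G t b) lo hi).
Proof.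
  intros H. assert (J := jc4_int0' (fun a b _ _ => G a b) lo hi H).
  apply (jc4_sw01 _ J).
Qed.

Lemma jc4_F01 F c0 d0 : jc4 F -> jc4 (fun a b _ _ => F a b c0 d0).
Proof. intros H; apply (jc4_comp F); auto using jc4_p0, jc4_p1, jc4_const. Qed.
Lemma jc4_F10 F c0 d0 : jc4 F -> jc4 (fun a b _ _ => F b a c0 d0).
Proof. intros H; apply (jc4_comp F); auto using jc4_p0, jc4_p1, jc4_const. Qed.

Lemma fubini01 F a b c d c0 d0 : jc4 F ->
  RInt (fun x => RInt (fun y => F x y c0 d0) c d) a b =
  RInt (fun y => RInt (fun x => F x y c0 d0) a b) c d.
Proof.
  intros HF.
  set (Phi := fun z => RInt (fun x => RInt (fun y => F x y c0 d0) c z) a b).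
  set (Psi := fun z => RInt (fun y => RInt (fun x => F x y c0 d0) a b) c z).
  assert (H01 := jc4_F01 F c0 d0 HF). assert (H10 := jc4_F10 F c0 d0 HF).
  assert (Cy : jc4 (fun y _ _ _ => RInt (fun x => F x y c0 d0) a b)).
  { apply (int_par_cont (fun x y => F x y c0 d0)); auto. }
  assert (Cx : forall z, jc4 (fun x _ _ _ => RInt (fun y => F x y c0 d0) c z)).
  { intros z. apply (int_par_cont (fun y x => F x y c0 d0)); auto. }
  assert (Dpsi : forall z, is_derive Psi z (RInt (fun x => F x z c0 d0) a b)).
  { intros z. unfold Psi.
    apply (is_derive_RInt (V:=R_NormedModule) (fun y => RInt (fun x => F x y c0 d0) a b)
             (fun z => RInt (fun y => RInt (fun x => F x y c0 d0) a b) c z) c z).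
    - apply filter_forall. intros z0. apply (RInt_correct (V:=R_CompleteNormedModule)).
      apply (jc4_exRInt0 _ 0 0 0 c z0 Cy).
    - apply (jc4_continuous0 _ 0 0 0 z Cy). }
  assert (Dinner : forall x z, is_derive (fun u => RInt (fun y => F x y c0 d0) c u) z (F x z c0 d0)).
  { intros x z. apply (is_derive_RInt (V:=R_NormedModule) (fun y => F x y c0 d0)
             (fun u => RInt (fun y => F x y c0 d0) c u) c z).
    - apply filter_forall. intros z0. apply (RInt_correct (V:=R_CompleteNormedModule)).
      apply (jc4_exRInt0 _ x 0 0 c z0 H10).
    - apply (jc4_continuous0 _ x 0 0 z H10). }
  assert (Dphi : forall z, is_derive Phi z (RInt (fun x => F x z c0 d0) a b)).
  { intros z. unfold Phi.
    assert (E : RInt (fun x => F x z c0 d0) a b =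
                RInt (fun t => Derive (fun u => RInt (fun y => F t y c0 d0) c u) z) a b).
    { apply RInt_ext. intros x _. symmetry. apply is_derive_unique. apply Dinner. }
    rewrite E.
    apply (is_derive_RInt_param (fun u t => RInt (fun y => F t y c0 d0) c u) a b z).
    - apply filter_forall. intros z0 t _. exists (F t z0 c0 d0). apply Dinner.
    - intros t _.
      assert (E2 : (fun u v => Derive (fun z1 => RInt (fun y => F v y c0 d0) c z1) u) =
                   (fun u v => F v u c0 d0)).
      { apply functional_extensionality; intro u; apply functional_extensionality; intro v.
        apply is_derive_unique. apply Dinner. }
      rewrite E2. apply (jc4_c2d (fun a b _ _ => F b a c0 d0)); auto.
    - apply filter_forall. intros y.
      apply (jc4_exRInt0 _ 0 0 0 a b (Cx y)). }
  assert (Hc : Phi c = Psi c).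
  { unfold Phi, Psi. rewrite RInt_point_R.
    rewrite (RInt_ext _ (fun _ => 0)). 2: { intros; apply RInt_point_R. }
    rewrite (RInt_const (V:=R_CompleteNormedModule)). unfold scal; simpl. unfold mult; simpl. ring. }
  assert (Hd : forall z, is_derive (fun z => Phi z - Psi z) z 0).
  { intros z. replace 0 with (RInt (fun x => F x z c0 d0) a b - RInt (fun x => F x z c0 d0) a b) by ring.
    apply (is_derive_minus (K:=R_AbsRing) (V:=R_NormedModule)); auto. }
  assert (E := zero_deriv_const _ Hd d c).
  change (Phi d = Psi d). lra.
Qed.

Lemma jc4_opp F : jc4 F -> jc4 (fun a b c d => - F a b c d).
Proof. intros H. apply (jc4_comp (fun x _ _ _ => -1 * x) F (fun _ _ _ _ => 0) (fun _ _ _ _ => 0) (fun _ _ _ _ => 0)) in H;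
  auto using jc4_const.
  - eapply (fun h => eq_ind _ jc4 H _ h). repeat (apply functional_extensionality; intro). ring.
  - apply (jc4_mult (fun _ _ _ _ => -1) (fun x _ _ _ => x)); auto using jc4_const, jc4_p0. Qed.
Lemma jc4_minus F G : jc4 F -> jc4 G -> jc4 (fun a b c d => F a b c d - G a b c d).
Proof. intros; apply jc4_plus; auto; apply jc4_opp; auto. Qed.

Lemma jc4_pow F n : jc4 F -> jc4 (fun a b c d => F a b c d ^ n).
Proof. intros H; induction n; simpl; [apply jc4_const| apply jc4_mult; auto]. Qed.

Ltac jc := repeat first [ assumption | apply jc4_const | apply jc4_p0 | apply jc4_p1 | apply jc4_p2 | apply jc4_p3
  | apply jc4_plus | apply jc4_minus | apply jc4_mult | apply jc4_opp | apply jc4_pow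
  | apply (jc4_fun1 sin); [exact continuity_sin|]
  | apply (jc4_fun1 cos); [exact continuity_cos|]
  | apply (jc4_fun1 exp); [intro; apply derivable_continuous_pt; apply derivable_exp|] ].


Lemma slice1 F x y z : jc4 F -> jc4 (fun _ s _ _ => F x s y z).
Proof. intros H; apply (jc4_comp F); auto using jc4_const, jc4_p1. Qed.
Lemma slice0 F y z w : jc4 F -> jc4 (fun s _ _ _ => F s y z w).
Proof. intros H; apply (jc4_comp F); auto using jc4_const, jc4_p0. Qed.
Lemma slice01 F z w : jc4 F -> jc4 (fun s t _ _ => F s t z w).
Proof. intros H; apply (jc4_comp F); auto using jc4_const, jc4_p0, jc4_p1. Qed.

Ltac jc2 := repeat first [ assumption | apply slice1; assumption | apply slice0; assumption | apply slice01; assumption | apply jc4_const | apply jc4_p0 | apply jc4_p1 | apply jc4_p2 | apply jc4_p3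
  | apply jc4_plus | apply jc4_minus | apply jc4_mult | apply jc4_opp | apply jc4_pow
  | apply (jc4_fun1 sin); [exact continuity_sin|]
  | apply (jc4_fun1 cos); [exact continuity_cos|]
  | apply (jc4_fun1 exp); [intro; apply derivable_continuous_pt; apply derivable_exp|]
  | apply slice1; assumption | apply slice0; assumption | apply slice01; assumption ].

Definition wk (x y : nat -> R) (k : nat) : nat -> R := fun j => if Nat.ltb j k then y j else x j.

Lemma wk_step (f : (nat -> R) -> R) (gk : (nat -> R) -> R) (x y : nat -> R) (k : nat) :
  (forall z, derivable_pt_lim (fun t => f (upd z k t)) (z k) (gk z)) ->
  exists xi : nat -> R, (forall j, Rabs (xi j - x j) <= Rabs (y j - x j)) /\
    f (wk x y (S k)) - f (wk x y k) = gk xi * (y k - x k).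
Proof.
  intros Hd.
  set (w := wk x y k).
  assert (E1 : wk x y (S k) = upd w k (y k)).
  { apply functional_extensionality; intro j. unfold w, wk, upd.
    destruct (Nat.eqb_spec j k); destruct (Nat.ltb_spec j (S k)); destruct (Nat.ltb_spec j k);
      subst; auto; try lia. }
  assert (E0 : w = upd w k (x k)).
  { apply functional_extensionality; intro j. unfold w, wk, upd.
    destruct (Nat.eqb_spec j k); destruct (Nat.ltb_spec j k); subst; auto; lia. }
  assert (Hw : forall j c, (c - x k) * (c - y k) <= 0 -> Rabs (upd w k c j - x j) <= Rabs (y j - x j)).
  { intros j c hc. unfold w, upd, wk.
    destruct (Nat.eqb_spec j k) as [->|ne].
    - assert (forall a b, (c - a) * (c - b) <= 0 -> Rabs (c - a) <= Rabs (b - a)).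
      { intros a b h. unfold Rabs; repeat destruct Rcase_abs; nra. }
      auto.
    - destruct (Nat.ltb j k); [right; auto|]. unfold Rminus; rewrite Rplus_opp_r, Rabs_R0; apply Rabs_pos. }
  assert (Hder : forall c, derivable_pt_lim (fun t => f (upd w k t)) c (gk (upd w k c))).
  { intros c. assert (H := Hd (upd w k c)).
    assert (E : (fun t => f (upd (upd w k c) k t)) = (fun t => f (upd w k t))).
    { apply functional_extensionality; intro t. f_equal. apply functional_extensionality; intro j.
      unfold upd. destruct (Nat.eqb j k); auto. }
    rewrite E in H. replace (upd w k c k) with c in H by (unfold upd; rewrite Nat.eqb_refl; auto). exact H. }
  rewrite E1. replace (f w) with (f (upd w k (x k))) by (rewrite <- E0; auto).
  destruct (Rtotal_order (x k) (y k)) as [l|[e|g]].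
  - destruct (MVT_cor2 (fun t => f (upd w k t)) (fun c => gk (upd w k c)) (x k) (y k) l
       (fun c _ => Hder c)) as [c [hc hc2]].
    exists (upd w k c). split; auto. intros j; apply Hw. nra.
  - exists w. split.
    + intros j. unfold w, wk. destruct (Nat.ltb j k); [right; auto|].
      unfold Rminus; rewrite Rplus_opp_r, Rabs_R0; apply Rabs_pos.
    + rewrite e. ring.
  - destruct (MVT_cor2 (fun t => f (upd w k t)) (fun c => gk (upd w k c)) (y k) (x k) g
       (fun c _ => Hder c)) as [c [hc hc2]].
    exists (upd w k c). split; [intros j; apply Hw; nra|]. lra.
Qed.

Definition sum5 (h : nat -> R) : R := h 0%nat + h 1%nat + h 2%nat + h 3%nat + h 4%nat.

Lemma Rabs_triang5 a b c d e : Rabs (a + b + c + d + e) <= Rabs a + Rabs b + Rabs c + Rabs d + Rabs e.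
Proof.
  pose proof (Rabs_triang (a+b+c+d) e). pose proof (Rabs_triang (a+b+c) d).
  pose proof (Rabs_triang (a+b) c). pose proof (Rabs_triang a b). lra.
Qed.

Lemma frechet (f : (nat -> R) -> R) (g : nat -> (nat -> R) -> R) :
  (forall i, (i < 5)%nat -> forall z, derivable_pt_lim (fun t => f (upd z i t)) (z i) (g i z)) ->
  (forall i, (i < 5)%nat -> cont5 (g i)) ->
  forall x eps, 0 < eps -> exists d, 0 < d /\ forall y,
    (forall j, (j < 5)%nat -> Rabs (y j - x j) < d) -> (forall j, (5 <= j)%nat -> y j = x j) ->
    Rabs (f y - f x - sum5 (fun i => g i x * (y i - x i))) <= eps * sum5 (fun i => Rabs (y i - x i)).
Proof.
  intros Hd Hc x eps he.
  destruct (Hc 0%nat ltac:(lia) x eps he) as [d0 [h0 D0]].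
  destruct (Hc 1%nat ltac:(lia) x eps he) as [d1 [h1 D1]].
  destruct (Hc 2%nat ltac:(lia) x eps he) as [d2 [h2 D2]].
  destruct (Hc 3%nat ltac:(lia) x eps he) as [d3 [h3 D3]].
  destruct (Hc 4%nat ltac:(lia) x eps he) as [d4 [h4 D4]].
  set (d := Rmin (Rmin (Rmin d0 d1) (Rmin d2 d3)) d4).
  assert (hd0 : d <= d0 /\ d <= d1 /\ d <= d2 /\ d <= d3 /\ d <= d4).
  { unfold d.
    pose proof (Rmin_l (Rmin (Rmin d0 d1) (Rmin d2 d3)) d4).
    pose proof (Rmin_r (Rmin (Rmin d0 d1) (Rmin d2 d3)) d4).
    pose proof (Rmin_l (Rmin d0 d1) (Rmin d2 d3)). pose proof (Rmin_r (Rmin d0 d1) (Rmin d2 d3)).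
    pose proof (Rmin_l d0 d1). pose proof (Rmin_r d0 d1). pose proof (Rmin_l d2 d3). pose proof (Rmin_r d2 d3).
    repeat split; lra. }
  exists d; split.
  { unfold d; repeat apply Rmin_pos; auto. }
  intros y Hy Hy5.
  assert (STEP : forall k (Dk : forall y0, (forall j, (j < 5)%nat -> Rabs (y0 j - x j) < d) ->
                       (forall j, (5 <= j)%nat -> y0 j = x j) -> Rabs (g k y0 - g k x) < eps),
       (k < 5)%nat ->
       Rabs (f (wk x y (S k)) - f (wk x y k) - g k x * (y k - x k)) <= eps * Rabs (y k - x k)).
  { intros k Dk hk. destruct (wk_step f (g k) x y k (Hd k hk)) as [xi [Hxi E]].
    rewrite E.
    assert (xi5 : forall j, (5 <= j)%nat -> xi j = x j).
    { intros j hj. specialize (Hxi j). rewrite Hy5 in Hxi by auto.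
      rewrite Rminus_diag, Rabs_R0 in Hxi. pose proof (Rabs_pos (xi j - x j)).
      assert (Rabs (xi j - x j) = 0) by lra. destruct (Req_dec (xi j - x j) 0) as [Z|Z]; [lra|]. apply Rabs_no_R0 in Z. lra. }
    assert (Hg : Rabs (g k xi - g k x) < eps).
    { apply Dk; auto. intros j hj. eapply Rle_lt_trans; [apply Hxi| auto]. }
    replace (g k xi * (y k - x k) - g k x * (y k - x k)) with ((g k xi - g k x) * (y k - x k)) by ring.
    rewrite Rabs_mult. apply Rmult_le_compat_r; [apply Rabs_pos| lra]. }
  assert (mk : forall dk (Dk : forall y0, (forall j, (j < 5)%nat -> Rabs (y0 j - x j) < dk) ->
      (forall j, (5 <= j)%nat -> y0 j = x j) -> Rabs (g 0%nat y0 - g 0%nat x) < eps), True) by auto.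
  assert (S0 := STEP 0%nat (fun y0 a b => D0 y0 (fun j hj => Rlt_le_trans _ _ _ (a j hj) (proj1 hd0)) b) ltac:(lia)).
  assert (S1 := STEP 1%nat (fun y0 a b => D1 y0 (fun j hj => Rlt_le_trans _ _ _ (a j hj) (proj1 (proj2 hd0))) b) ltac:(lia)).
  assert (S2 := STEP 2%nat (fun y0 a b => D2 y0 (fun j hj => Rlt_le_trans _ _ _ (a j hj) (proj1 (proj2 (proj2 hd0)))) b) ltac:(lia)).
  assert (S3 := STEP 3%nat (fun y0 a b => D3 y0 (fun j hj => Rlt_le_trans _ _ _ (a j hj) (proj1 (proj2 (proj2 (proj2 hd0))))) b) ltac:(lia)).
  assert (S4 := STEP 4%nat (fun y0 a b => D4 y0 (fun j hj => Rlt_le_trans _ _ _ (a j hj) (proj2 (proj2 (proj2 (proj2 hd0))))) b) ltac:(lia)).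
  assert (W0 : wk x y 0 = x).
  { apply functional_extensionality; intro j. reflexivity. }
  assert (W5 : wk x y 5 = y).
  { apply functional_extensionality; intro j. unfold wk.
    destruct (Nat.ltb_spec j 5); auto. symmetry; apply Hy5; lia. }
  replace (f y) with (f (wk x y 5)) by (rewrite W5; auto).
  replace (f x) with (f (wk x y 0)) by (rewrite W0; auto).
  unfold sum5.
  match goal with |- Rabs ?E <= _ =>
    replace E with ((f (wk x y 1) - f (wk x y 0) - g 0%nat x * (y 0%nat - x 0%nat)) +
                    (f (wk x y 2) - f (wk x y 1) - g 1%nat x * (y 1%nat - x 1%nat)) +
                    (f (wk x y 3) - f (wk x y 2) - g 2%nat x * (y 2%nat - x 2%nat)) +
                    (f (wk x y 4) - f (wk x y 3) - g 3%nat x * (y 3%nat - x 3%nat)) +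
                    (f (wk x y 5) - f (wk x y 4) - g 4%nat x * (y 4%nat - x 4%nat))) by ring end.
  eapply Rle_trans; [apply Rabs_triang5|]. lra.
Qed.

Lemma sum5_le (a b : nat -> R) : (forall i, (i < 5)%nat -> a i <= b i) -> sum5 a <= sum5 b.
Proof. intros H; unfold sum5. pose proof (H 0%nat ltac:(lia)); pose proof (H 1%nat ltac:(lia));
  pose proof (H 2%nat ltac:(lia)); pose proof (H 3%nat ltac:(lia)); pose proof (H 4%nat ltac:(lia)); lra. Qed.

Lemma sum5_abs (a : nat -> R) : Rabs (sum5 a) <= sum5 (fun i => Rabs (a i)).
Proof. unfold sum5. apply Rabs_triang5. Qed.

Lemma sum5_nonneg (a : nat -> R) : (forall i, (i < 5)%nat -> 0 <= a i) -> 0 <= sum5 a.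
Proof. intros H. apply Rle_trans with (sum5 (fun _ => 0)). unfold sum5; lra. apply sum5_le; auto. Qed.

Lemma chain5 (f : (nat -> R) -> R) (g : nat -> (nat -> R) -> R) (c : R -> nat -> R) (c' : nat -> R) t0 :
  (forall i, (i < 5)%nat -> forall z, derivable_pt_lim (fun t => f (upd z i t)) (z i) (g i z)) ->
  (forall i, (i < 5)%nat -> cont5 (g i)) ->
  (forall t j, (5 <= j)%nat -> c t j = c t0 j) ->
  (forall j, (j < 5)%nat -> derivable_pt_lim (fun t => c t j) t0 (c' j)) ->
  derivable_pt_lim (fun t => f (c t)) t0 (sum5 (fun i => g i (c t0) * c' i)).
Proof.
  intros Hd Hc Hc5 Hcd eps he.
  set (x := c t0).
  set (G := sum5 (fun i => Rabs (g i x))).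
  set (C := sum5 (fun i => Rabs (c' i) + 1)).
  assert (hG : 0 <= G). { apply sum5_nonneg; intros; apply Rabs_pos. }
  assert (hC : 1 <= C). { unfold C, sum5. pose proof (Rabs_pos (c' 0%nat)); pose proof (Rabs_pos (c' 1%nat));
    pose proof (Rabs_pos (c' 2%nat)); pose proof (Rabs_pos (c' 3%nat)); pose proof (Rabs_pos (c' 4%nat)); lra. }
  set (e1 := Rmin 1 (eps / (2 * (G + 1)))).
  assert (he1 : 0 < e1) by (unfold e1; apply Rmin_pos; [lra| apply Rdiv_lt_0_compat; lra]).
  assert (he1' : e1 <= 1 /\ e1 <= eps / (2 * (G + 1))) by (unfold e1; split; [apply Rmin_l|apply Rmin_r]).
  assert (Hcd' : forall j, (j < 5)%nat -> exists dj, 0 < dj /\ forall h, h <> 0 -> Rabs h < dj ->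
            Rabs ((c (t0 + h) j - x j) / h - c' j) < e1).
  { intros j hj. destruct (Hcd j hj e1 he1) as [dj Hdj]. exists (pos dj); split; [apply cond_pos|].
    intros h hh hh2. apply (Hdj h hh hh2). }
  destruct (Hcd' 0%nat ltac:(lia)) as [q0 [hq0 Q0]].
  destruct (Hcd' 1%nat ltac:(lia)) as [q1 [hq1 Q1]].
  destruct (Hcd' 2%nat ltac:(lia)) as [q2 [hq2 Q2]].
  destruct (Hcd' 3%nat ltac:(lia)) as [q3 [hq3 Q3]].
  destruct (Hcd' 4%nat ltac:(lia)) as [q4 [hq4 Q4]].
  destruct (frechet f g Hd Hc x (eps / (4 * C))) as [d [hd D]].
  { apply Rdiv_lt_0_compat; lra. }
  set (del := Rmin (Rmin (Rmin q0 q1) (Rmin q2 q3)) (Rmin q4 (d / C))).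
  assert (hdel : 0 < del).
  { unfold del. repeat apply Rmin_pos; auto. apply Rdiv_lt_0_compat; lra. }
  assert (hdl : del <= q0 /\ del <= q1 /\ del <= q2 /\ del <= q3 /\ del <= q4 /\ del <= d / C).
  { unfold del.
    pose proof (Rmin_l (Rmin (Rmin q0 q1) (Rmin q2 q3)) (Rmin q4 (d / C))).
    pose proof (Rmin_r (Rmin (Rmin q0 q1) (Rmin q2 q3)) (Rmin q4 (d / C))).
    pose proof (Rmin_l (Rmin q0 q1) (Rmin q2 q3)). pose proof (Rmin_r (Rmin q0 q1) (Rmin q2 q3)).
    pose proof (Rmin_l q0 q1). pose proof (Rmin_r q0 q1). pose proof (Rmin_l q2 q3). pose proof (Rmin_r q2 q3).
    pose proof (Rmin_l q4 (d/C)). pose proof (Rmin_r q4 (d/C)).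
    repeat split; lra. }
  exists (mkposreal del hdel). intros h hh hh2. simpl in hh2.
  set (y := c (t0 + h)).
  assert (Qj : forall j, (j < 5)%nat -> Rabs ((y j - x j) / h - c' j) < e1).
  { intros j hj. unfold y.
    destruct j as [|[|[|[|[|j]]]]]; [apply Q0|apply Q1|apply Q2|apply Q3|apply Q4|lia]; auto; lra. }
  assert (Qb : forall j, (j < 5)%nat -> Rabs ((y j - x j) / h) <= Rabs (c' j) + 1).
  { intros j hj. specialize (Qj j hj).
    replace ((y j - x j) / h) with (((y j - x j) / h - c' j) + c' j) by ring.
    eapply Rle_trans; [apply Rabs_triang|]. lra. }
  assert (hhp : 0 < Rabs h) by (apply Rabs_pos_lt; auto).
  assert (Dy : forall j, (j < 5)%nat -> Rabs (y j - x j) < d).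
  { intros j hj.
    replace (y j - x j) with (h * ((y j - x j) / h)) by (field; auto).
    rewrite Rabs_mult.
    apply Rle_lt_trans with (Rabs h * C).
    { apply Rmult_le_compat_l; [lra|]. eapply Rle_trans; [apply Qb; auto|].
      unfold C, sum5. pose proof (Rabs_pos (c' 0%nat)); pose proof (Rabs_pos (c' 1%nat));
      pose proof (Rabs_pos (c' 2%nat)); pose proof (Rabs_pos (c' 3%nat)); pose proof (Rabs_pos (c' 4%nat)).
      destruct j as [|[|[|[|[|j]]]]]; lra || lia. }
    apply Rlt_le_trans with (d / C * C). { apply Rmult_lt_compat_r; lra. }
    right; field; lra. }
  assert (Y5 : forall j, (5 <= j)%nat -> y j = x j). { intros; unfold y, x; apply Hc5; auto. }
  specialize (D y Dy Y5).
  set (Rm := f y - f x - sum5 (fun i => g i x * (y i - x i))) in D.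
  assert (EQ : (f y - f x) / h - sum5 (fun i => g i x * c' i) =
               sum5 (fun i => g i x * ((y i - x i) / h - c' i)) + Rm / h).
  { unfold Rm, sum5. field. auto. }
  change (Rabs ((f (c (t0 + h)) - f (c t0)) / h - sum5 (fun i => g i (c t0) * c' i)) < eps).
  fold y x. rewrite EQ.
  eapply Rle_lt_trans; [apply Rabs_triang|].
  assert (T1 : Rabs (sum5 (fun i => g i x * ((y i - x i) / h - c' i))) <= G * e1).
  { eapply Rle_trans; [apply sum5_abs|]. unfold G.
    replace (sum5 (fun i => Rabs (g i x)) * e1) with (sum5 (fun i => Rabs (g i x) * e1)) by (unfold sum5; ring).
    apply sum5_le. intros i hi. rewrite Rabs_mult. apply Rmult_le_compat_l; [apply Rabs_pos|].
    apply Rlt_le; auto. }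
  assert (T2 : Rabs (Rm / h) <= eps / (4 * C) * C).
  { unfold Rdiv at 1. rewrite Rabs_mult, Rabs_inv.
    apply Rle_trans with (eps / (4 * C) * sum5 (fun i => Rabs (y i - x i)) * / Rabs h).
    { apply Rmult_le_compat_r; [apply Rlt_le, Rinv_0_lt_compat; lra| exact D]. }
    rewrite Rmult_assoc. apply Rmult_le_compat_l; [apply Rlt_le, Rdiv_lt_0_compat; lra|].
    replace (sum5 (fun i => Rabs (y i - x i)) * / Rabs h) with (sum5 (fun i => Rabs ((y i - x i) / h))).
    { apply sum5_le. intros i hi; apply Qb; auto. }
    unfold sum5, Rdiv. rewrite !Rabs_mult, !Rabs_inv. ring. }
  assert (T3 : G * e1 <= G * (eps / (2 * (G + 1)))) by (apply Rmult_le_compat_l; lra).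
  assert (T4 : G * (eps / (2 * (G + 1))) < eps / 2).
  { apply Rlt_le_trans with ((G + 1) * (eps / (2 * (G + 1)))).
    { apply Rmult_lt_compat_r; [apply Rdiv_lt_0_compat|]; lra. }
    right; field; lra. }
  assert (T5 : eps / (4 * C) * C = eps / 4) by (field; lra).
  lra.
Qed.

Definition Xp (u v th ph : R) : nat -> R := fun j =>
  match j with 0%nat => u | 1%nat => v | 2%nat => sin th * cos ph | 3%nat => sin th * sin ph
  | 4%nat => cos th | _ => 0 end.

Lemma jc4_X j : jc4 (fun u v th ph => Xp u v th ph j).
Proof.
  destruct j as [|[|[|[|[|j]]]]]; simpl.
  - apply jc4_p0.
  - apply jc4_p1.
  - apply jc4_mult; [apply (jc4_fun1 sin (fun _ _ c _ => c))| apply (jc4_fun1 cos (fun _ _ _ d => d))];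
      auto using jc4_p2, jc4_p3, continuity_sin, continuity_cos.
  - apply jc4_mult; [apply (jc4_fun1 sin (fun _ _ c _ => c))| apply (jc4_fun1 sin (fun _ _ _ d => d))];
      auto using jc4_p2, jc4_p3, continuity_sin, continuity_cos.
  - apply (jc4_fun1 cos (fun _ _ c _ => c)); auto using jc4_p2, continuity_cos.
  - apply jc4_const.
Qed.

Lemma jc4_gX (g : (nat -> R) -> R) : cont5 g -> jc4 (fun u v th ph => g (Xp u v th ph)).
Proof.
  intros Hg a b c d eps he.
  destruct (Hg (Xp a b c d) eps he) as [d0 [hd0 D0]].
  destruct (jc4_X 0 a b c d d0 hd0) as [e0 [he0 E0]].
  destruct (jc4_X 1 a b c d d0 hd0) as [e1 [he1 E1]].
  destruct (jc4_X 2 a b c d d0 hd0) as [e2 [he2 E2]].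
  destruct (jc4_X 3 a b c d d0 hd0) as [e3 [he3 E3]].
  destruct (jc4_X 4 a b c d d0 hd0) as [e4 [he4 E4]].
  set (del := Rmin (Rmin (Rmin e0 e1) (Rmin e2 e3)) e4).
  assert (hdl : del <= e0 /\ del <= e1 /\ del <= e2 /\ del <= e3 /\ del <= e4).
  { unfold del.
    pose proof (Rmin_l (Rmin (Rmin e0 e1) (Rmin e2 e3)) e4).
    pose proof (Rmin_r (Rmin (Rmin e0 e1) (Rmin e2 e3)) e4).
    pose proof (Rmin_l (Rmin e0 e1) (Rmin e2 e3)). pose proof (Rmin_r (Rmin e0 e1) (Rmin e2 e3)).
    pose proof (Rmin_l e0 e1). pose proof (Rmin_r e0 e1). pose proof (Rmin_l e2 e3). pose proof (Rmin_r e2 e3).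
    repeat split; lra. }
  exists del; split. { unfold del; repeat apply Rmin_pos; auto. }
  intros a' b' c' d' h1 h2 h3 h4. apply D0.
  - intros j hj. destruct j as [|[|[|[|[|j]]]]];
      [apply E0|apply E1|apply E2|apply E3|apply E4|lia]; lra.
  - intros j hj. destruct j as [|[|[|[|[|j]]]]]; try lia. reflexivity.
Qed.

Lemma get_partials Phi : smooth5 Phi -> exists g : nat -> (nat -> R) -> R,
  (forall i, (i < 5)%nat -> forall z, derivable_pt_lim (fun t => lift5 Phi (upd z i t)) (z i) (g i z)) /\
  (forall i, (i < 5)%nat -> cont5 (g i)).
Proof.
  intros H. destruct (H 1%nat) as [_ H1].
  destruct (H1 0%nat ltac:(lia)) as [g0 [G0 [C0 _]]].
  destruct (H1 1%nat ltac:(lia)) as [g1 [G1 [C1 _]]].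
  destruct (H1 2%nat ltac:(lia)) as [g2 [G2 [C2 _]]].
  destruct (H1 3%nat ltac:(lia)) as [g3 [G3 [C3 _]]].
  destruct (H1 4%nat ltac:(lia)) as [g4 [G4 [C4 _]]].
  exists (fun i => match i with 0%nat => g0 | 1%nat => g1 | 2%nat => g2 | 3%nat => g3 | _ => g4 end).
  split; intros i hi; destruct i as [|[|[|[|[|i]]]]]; auto; lia.
Qed.

Lemma dform Phi du dv dth dph : smooth5 Phi -> partials Phi du dv dth dph ->
  exists D0 D1 DTH Q : R -> R -> R -> R -> R, jc4 D0 /\ jc4 D1 /\ jc4 DTH /\ jc4 Q /\
  forall u v th ph, du u v th ph = D0 u v th ph /\ dv u v th ph = D1 u v th ph /\
     dth u v th ph = DTH u v th ph /\ dph u v th ph = sin th * Q u v th ph.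
Proof.
  intros Hs Hp. destruct (get_partials Phi Hs) as [g [Hg Hc]].
  set (f := lift5 Phi).
  exists (fun u v th ph => g 0%nat (Xp u v th ph)), (fun u v th ph => g 1%nat (Xp u v th ph)),
    (fun u v th ph => g 2%nat (Xp u v th ph) * (cos th * cos ph) + g 3%nat (Xp u v th ph) * (cos th * sin ph)
        + g 4%nat (Xp u v th ph) * (- sin th)),
    (fun u v th ph => g 3%nat (Xp u v th ph) * cos ph - g 2%nat (Xp u v th ph) * sin ph).
  assert (J : forall i, (i < 5)%nat -> jc4 (fun u v th ph => g i (Xp u v th ph))).
  { intros; apply jc4_gX; auto. }
  assert (Jc : jc4 (fun _ _ th _ => cos th)) by (apply (jc4_fun1 cos (fun _ _ c _ => c)); auto using jc4_p2, continuity_cos).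
  assert (Js : jc4 (fun _ _ th _ => sin th)) by (apply (jc4_fun1 sin (fun _ _ c _ => c)); auto using jc4_p2, continuity_sin).
  assert (Jc3 : jc4 (fun _ _ _ ph => cos ph)) by (apply (jc4_fun1 cos (fun _ _ _ d => d)); auto using jc4_p3, continuity_cos).
  assert (Js3 : jc4 (fun _ _ _ ph => sin ph)) by (apply (jc4_fun1 sin (fun _ _ _ d => d)); auto using jc4_p3, continuity_sin).
  assert (Jg := fun i => J i).
  assert (J0 := J 0%nat ltac:(lia)). assert (J1 := J 1%nat ltac:(lia)).
  assert (J2 := J 2%nat ltac:(lia)). assert (J3 := J 3%nat ltac:(lia)). assert (J4 := J 4%nat ltac:(lia)).
  split; [auto|]. split; [auto|]. split; [jc|]. split; [jc|].
  intros u v th ph. destruct (Hp u v th ph) as [Pu [Pv [Pth Pph]]].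
  split; [|split; [|split]].
  - eapply uniqueness_limite; [exact Pu|]. exact (Hg 0%nat ltac:(lia) (Xp u v th ph)).
  - eapply uniqueness_limite; [exact Pv|]. exact (Hg 1%nat ltac:(lia) (Xp u v th ph)).
  - eapply uniqueness_limite; [exact Pth|].
    assert (CH := chain5 f g (fun t => Xp u v t ph)
      (fun j => match j with 2%nat => cos th * cos ph | 3%nat => cos th * sin ph | 4%nat => - sin th | _ => 0 end)
      th Hg Hc).
    match goal with |- derivable_pt_lim _ _ ?L =>
      replace L with (sum5 (fun i => g i (Xp u v th ph) *
        match i with 2%nat => cos th * cos ph | 3%nat => cos th * sin ph | 4%nat => - sin th | _ => 0 end)) end.
    2: { unfold sum5; simpl; ring. }
    apply CH.
    + intros t j hj. destruct j as [|[|[|[|[|j]]]]]; try lia; reflexivity.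
    + intros j hj. destruct j as [|[|[|[|[|j]]]]]; try lia; simpl; apply is_derive_Reals;
        auto_derive; auto; ring.
  - eapply uniqueness_limite; [exact Pph|].
    assert (CH := chain5 f g (fun t => Xp u v th t)
      (fun j => match j with 2%nat => - sin th * sin ph | 3%nat => sin th * cos ph | _ => 0 end)
      ph Hg Hc).
    match goal with |- derivable_pt_lim _ _ ?L =>
      replace L with (sum5 (fun i => g i (Xp u v th ph) *
        match i with 2%nat => - sin th * sin ph | 3%nat => sin th * cos ph | _ => 0 end)) end.
    2: { unfold sum5; simpl; ring. }
    apply CH.
    + intros t j hj. destruct j as [|[|[|[|[|j]]]]]; try lia; reflexivity.
    + intros j hj. destruct j as [|[|[|[|[|j]]]]]; try lia; simpl; apply is_derive_Reals;
        auto_derive; auto; ring.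
Qed.

Definition wf (M e : R) (Rf : R -> R) (s : R) : R := - (1 - 2 * M / Rf s + e ^ 2 / (Rf s) ^ 2).

Lemma Om2_wf M e Rf u v : Om2 M e Rf u v = wf M e Rf ((u + v) / 2).
Proof. reflexivity. Qed.

Lemma rm_basic M e : 0 < Rabs e < M -> 0 < rminus M e /\
  forall r, rminus M e < r < rplus M e -> 1 - 2 * M / r + e ^ 2 / r ^ 2 < 0.
Proof.
  intros [he hM].
  assert (hS : 0 <= M ^ 2 - e ^ 2).
  { assert (Rabs e ^ 2 = e ^ 2) by (rewrite RPow_abs; apply Rabs_pos_eq; apply pow2_ge_0). nra. }
  set (S := sqrt (M ^ 2 - e ^ 2)).
  assert (S2 : S * S = M ^ 2 - e ^ 2) by (apply sqrt_sqrt; auto).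
  assert (S0 : 0 <= S) by apply sqrt_pos.
  assert (e2 : 0 < e ^ 2).
  { assert (Rabs e ^ 2 = e ^ 2) by (rewrite RPow_abs; apply Rabs_pos_eq; apply pow2_ge_0). nra. }
  assert (SM : S < M) by nra.
  unfold rminus, rplus; fold S. split; [lra|].
  intros r [h1 h2].
  assert (hr : 0 < r) by lra.
  assert (Q : r ^ 2 - 2 * M * r + e ^ 2 < 0).
  { replace (r ^ 2 - 2 * M * r + e ^ 2) with ((r - (M + S)) * (r - (M - S))) by nra. nra. }
  replace (1 - 2 * M / r + e ^ 2 / r ^ 2) with ((r ^ 2 - 2 * M * r + e ^ 2) / r ^ 2) by (field; lra).
  apply Rdiv_neg_pos; auto. nra.
Qed.

Lemma Rf_facts M e Rf : 0 < Rabs e < M -> RN_rfun M e Rf ->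
  (forall s, 0 < rminus M e < Rf s) /\ (forall s, 0 < wf M e Rf s) /\
  (forall s, is_derive Rf s (- wf M e Rf s)) /\
  (forall s1 s2, s1 <= s2 -> Rf s2 <= Rf s1).
Proof.
  intros hMe [HR1 [HR2 _]].
  destruct (rm_basic M e hMe) as [hrm Hneg].
  assert (P1 : forall s, 0 < rminus M e < Rf s) by (intros s; split; [auto| apply HR1]).
  assert (P2 : forall s, 0 < wf M e Rf s).
  { intros s. unfold wf. assert (H := Hneg (Rf s) (HR1 s)). lra. }
  assert (P3 : forall s, is_derive Rf s (- wf M e Rf s)).
  { intros s. apply is_derive_Reals. unfold wf. rewrite Ropp_involutive. apply HR2. }
  split; [auto|]. split; [auto|]. split; [auto|].
  intros s1 s2 hs. destruct (Req_dec s1 s2) as [->|ne]; [lra|].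
  destruct (MVT_cor2 Rf (fun s => - wf M e Rf s) s1 s2 ltac:(lra)) as [c [hc _]].
  { intros c _. apply is_derive_Reals. apply P3. }
  assert (0 < wf M e Rf c) by apply P2. nra.
Qed.

Lemma wf_decay M e Rf rblue rsb beta : 0 < Rabs e < M -> RN_rfun M e Rf ->
  (forall r, rminus M e < r <= rblue -> - (1 / (2 * r ^ 2) * (M - e ^ 2 / r)) >= beta) ->
  Rf rsb = rblue ->
  forall s, rsb <= s -> wf M e Rf s * exp (4 * beta * s) <= wf M e Rf rsb * exp (4 * beta * rsb).
Proof.
  intros hMe hR hb hrsb.
  destruct (Rf_facts M e Rf hMe hR) as [P1 [P2 [P3 P4]]].
  destruct hR as [HR1 [HR2 _]].
  assert (HD : forall s, is_derive Rf s (1 - 2*M/Rf s + e^2/(Rf s)^2)).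
  { intros s. apply is_derive_Reals. apply HR2. }
  set (z := fun s => -(1 - 2*M/Rf s + e^2/(Rf s)^2) * exp(4*beta*s)).
  assert (Dz : forall s, is_derive z s
     (-(1 - 2*M/Rf s + e^2/(Rf s)^2) * (2*M/(Rf s)^2 - 2*e^2/(Rf s)^3 + 4*beta) * exp(4*beta*s))).
  { intros s. unfold z. assert (0 < Rf s) by (destruct (P1 s); lra).
    auto_derive.
    - repeat split; try (exists (1 - 2*M/Rf s + e^2/(Rf s)^2); apply HD); apply Rgt_not_eq; try nra; auto.
    - replace (Derive (fun x => Rf x) s) with (1 - 2*M/Rf s + e^2/(Rf s)^2)
        by (symmetry; apply is_derive_unique; apply HD).
      field. lra. }
  intros s hs. change (z s <= z rsb).
  destruct (Req_dec s rsb) as [->|ne]; [lra|].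
  destruct (MVT_cor2 z (fun s => -(1 - 2*M/Rf s + e^2/(Rf s)^2) * (2*M/(Rf s)^2 - 2*e^2/(Rf s)^3 + 4*beta) * exp(4*beta*s)) rsb s ltac:(lra)) as [c [hc hc2]].
  { intros c _. apply is_derive_Reals. apply Dz. }
  assert (hc1 : Rf c <= rblue) by (rewrite <- hrsb; apply P4; lra).
  assert (hc0 : rminus M e < Rf c) by apply P1.
  assert (hk := hb (Rf c) (conj hc0 hc1)).
  assert (hr : 0 < Rf c) by (destruct (P1 c); lra).
  assert (K : 2*M/(Rf c)^2 - 2*e^2/(Rf c)^3 + 4*beta <= 0).
  { replace (2*M/(Rf c)^2 - 2*e^2/(Rf c)^3) with (4 * (1 / (2 * Rf c ^ 2) * (M - e ^ 2 / Rf c)))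
      by (field; lra). lra. }
  assert (W : 0 < -(1 - 2*M/Rf c + e^2/(Rf c)^2)) by (apply (P2 c)).
  assert (0 < exp (4*beta*c)) by apply exp_pos.
  assert (-(1 - 2*M/Rf c + e^2/(Rf c)^2) * (2*M/(Rf c)^2 - 2*e^2/(Rf c)^3 + 4*beta) * exp(4*beta*c) <= 0).
  { apply Rmult_le_0_r; [|lra]. apply Rmult_le_0_l; lra. }
  nra.
Qed.

Lemma wf_cont M e Rf : 0 < Rabs e < M -> RN_rfun M e Rf -> forall s, continuity_pt (wf M e Rf) s.
Proof.
  intros hMe hR s.
  destruct (Rf_facts M e Rf hMe hR) as [P1 [P2 [P3 P4]]].
  apply derivable_continuous_pt.
  exists ((2*M/(Rf s)^2 - 2*e^2/(Rf s)^3) * wf M e Rf s).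
  apply is_derive_Reals. unfold wf at 1.
  assert (0 < Rf s) by (destruct (P1 s); lra).
  auto_derive.
  - repeat split; try (exists (- wf M e Rf s); apply P3); apply Rgt_not_eq; try nra; auto.
  - replace (Derive (fun x => Rf x) s) with (- wf M e Rf s)
        by (symmetry; apply is_derive_unique; apply P3).
    unfold wf. field. lra.
Qed.

Lemma Rf_cont M e Rf : 0 < Rabs e < M -> RN_rfun M e Rf -> forall s, continuity_pt Rf s.
Proof.
  intros hMe hR s. destruct (Rf_facts M e Rf hMe hR) as [P1 [P2 [P3 P4]]].
  apply derivable_continuous_pt. exists (- wf M e Rf s). apply is_derive_Reals. apply P3.
Qed.

Definition IPh (F : R -> R -> R -> R -> R) : R -> R -> R -> R -> R :=
  fun u v th ph => RInt (fun t => F u v th t) 0 (2 * PI).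
Definition ITh (F : R -> R -> R -> R -> R) : R -> R -> R -> R -> R :=
  fun u v th ph => RInt (fun t => F u v t ph) 0 PI.
Definition IVv (a b : R) (F : R -> R -> R -> R -> R) : R -> R -> R -> R -> R :=
  fun u v th ph => RInt (fun t => F u t th ph) a b.
Definition IUu (a b : R) (F : R -> R -> R -> R -> R) : R -> R -> R -> R -> R :=
  fun u v th ph => RInt (fun t => F t v th ph) a b.
Definition S2 F := ITh (IPh F).

Lemma jc4_IUu a b F : jc4 F -> jc4 (IUu a b F).
Proof. intros H. apply (jc4_int0' F a b H). Qed.

Lemma jc4_IVv a b F : jc4 F -> jc4 (IVv a b F).
Proof.
  intros H. assert (G : jc4 (fun t u th ph => F u t th ph)).
  { apply (jc4_comp F); auto using jc4_p0, jc4_p1, jc4_p2, jc4_p3. }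
  assert (J := jc4_int0' _ a b G).
  apply (jc4_comp _ (fun _ v _ _ => v) (fun u _ _ _ => u) (fun _ _ th _ => th) (fun _ _ _ ph => ph) J);
    auto using jc4_p0, jc4_p1, jc4_p2, jc4_p3.
Qed.

Lemma jc4_ITh F : jc4 F -> jc4 (ITh F).
Proof.
  intros H. assert (G : jc4 (fun t u v ph => F u v t ph)).
  { apply (jc4_comp F); auto using jc4_p0, jc4_p1, jc4_p2, jc4_p3. }
  assert (J := jc4_int0' _ 0 PI G).
  apply (jc4_comp _ (fun _ _ th _ => th) (fun u _ _ _ => u) (fun _ v _ _ => v) (fun _ _ _ ph => ph) J);
    auto using jc4_p0, jc4_p1, jc4_p2, jc4_p3.
Qed.

Lemma jc4_IPh F : jc4 F -> jc4 (IPh F).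
Proof.
  intros H. assert (G : jc4 (fun t u v th => F u v th t)).
  { apply (jc4_comp F); auto using jc4_p0, jc4_p1, jc4_p2, jc4_p3. }
  assert (J := jc4_int0' _ 0 (2*PI) G).
  apply (jc4_comp _ (fun _ _ _ ph => ph) (fun u _ _ _ => u) (fun _ v _ _ => v) (fun _ _ th _ => th) J);
    auto using jc4_p0, jc4_p1, jc4_p2, jc4_p3.
Qed.

Lemma jc4_S2 F : jc4 F -> jc4 (S2 F).
Proof. intros; apply jc4_ITh, jc4_IPh; auto. Qed.

Lemma ex0 F b c d lo hi : jc4 F -> ex_RInt (fun t => F t b c d) lo hi.
Proof. apply jc4_exRInt0. Qed.
Lemma ex1 F a c d lo hi : jc4 F -> ex_RInt (fun t => F a t c d) lo hi.
Proof. intros H. apply (jc4_exRInt0 (fun t a c d => F a t c d)). apply (jc4_comp F); auto using jc4_p0, jc4_p1, jc4_p2, jc4_p3. Qed.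
Lemma ex2 F a b d lo hi : jc4 F -> ex_RInt (fun t => F a b t d) lo hi.
Proof. intros H. apply (jc4_exRInt0 (fun t a b d => F a b t d)). apply (jc4_comp F); auto using jc4_p0, jc4_p1, jc4_p2, jc4_p3. Qed.
Lemma ex3 F a b c lo hi : jc4 F -> ex_RInt (fun t => F a b c t) lo hi.
Proof. intros H. apply (jc4_exRInt0 (fun t a b c => F a b c t)). apply (jc4_comp F); auto using jc4_p0, jc4_p1, jc4_p2, jc4_p3. Qed.

Lemma fub2 (f : R -> R -> R) a b c d : jc4 (fun x y _ _ => f x y) ->
  RInt (fun x => RInt (fun y => f x y) c d) a b = RInt (fun y => RInt (fun x => f x y) a b) c d.
Proof. intros H. apply (fubini01 (fun x y _ _ => f x y) a b c d 0 0 H). Qed.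

Lemma swap_S2_V F u a b : jc4 F ->
  RInt (fun v => S2 F u v 0 0) a b = S2 (IVv a b F) u 0 0 0.
Proof.
  intros H. unfold S2, ITh, IPh, IVv.
  rewrite (fub2 (fun v th => RInt (fun t => F u v th t) 0 (2 * PI))).
  2: { apply (jc4_comp (IPh F) (fun _ _ _ _ => u) (fun x _ _ _ => x) (fun _ y _ _ => y) (fun _ _ _ _ => 0));
       auto using jc4_IPh, jc4_const, jc4_p0, jc4_p1. }
  apply RInt_ext. intros th _.
  apply (fub2 (fun v ph => F u v th ph)).
  apply (jc4_comp F (fun _ _ _ _ => u) (fun x _ _ _ => x) (fun _ _ _ _ => th) (fun _ y _ _ => y));
    auto using jc4_const, jc4_p0, jc4_p1.
Qed.

Lemma swap_S2_U F v a b : jc4 F ->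
  RInt (fun u => S2 F u v 0 0) a b = S2 (IUu a b F) 0 v 0 0.
Proof.
  intros H. unfold S2, ITh, IPh, IUu.
  rewrite (fub2 (fun u th => RInt (fun t => F u v th t) 0 (2 * PI))).
  2: { apply (jc4_comp (IPh F) (fun x _ _ _ => x) (fun _ _ _ _ => v) (fun _ y _ _ => y) (fun _ _ _ _ => 0));
       auto using jc4_IPh, jc4_const, jc4_p0, jc4_p1. }
  apply RInt_ext. intros th _.
  apply (fub2 (fun u ph => F u v th ph)).
  apply (jc4_comp F (fun x _ _ _ => x) (fun _ _ _ _ => v) (fun _ _ _ _ => th) (fun _ y _ _ => y));
    auto using jc4_const, jc4_p0, jc4_p1.
Qed.

Lemma toDefs f a b : ex_RInt f a b -> Defs.RInt f a b (RInt f a b).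
Proof. intros H. exists (ex_RInt_Reals_0 f a b H). symmetry. apply RInt_Reals. Qed.

Lemma fromDefs f a b I : Defs.RInt f a b I -> ex_RInt f a b /\ RInt f a b = I.
Proof. intros [pr E]. split; [apply ex_RInt_Reals_1; auto|]. rewrite (RInt_Reals f a b pr); auto. Qed.

Lemma RInt_le_R f g a b : a <= b -> ex_RInt f a b -> ex_RInt g a b ->
  (forall x, a <= x <= b -> f x <= g x) -> RInt f a b <= RInt g a b.
Proof. intros. apply RInt_le; auto. intros; apply H2; lra. Qed.

Lemma RInt_ge0_R f a b : a <= b -> ex_RInt f a b -> (forall x, a <= x <= b -> 0 <= f x) -> 0 <= RInt f a b.
Proof. intros. apply RInt_ge_0; auto. intros; apply H1; lra. Qed.

Lemma PI_pos' : 0 <= PI. Proof. pose proof PI_RGT_0; lra. Qed.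

Lemma sph_le (h : R -> R -> R) (C : R -> R -> R -> R -> R) u v k :
  jc4 C -> (forall th ph, 0 <= th <= PI -> 0 <= ph <= 2 * PI -> h th ph * sin th <= C u v th ph) ->
  SphInt h k -> k <= S2 C u v 0 0.
Proof.
  intros HC Hle [Gt [HG HI]].
  destruct (fromDefs _ _ _ _ HI) as [exG EG]. rewrite <- EG.
  unfold S2, ITh, IPh. apply RInt_le_R; auto using PI_pos'.
  - apply (ex2 (IPh C) u v 0 0 PI). apply jc4_IPh; auto.
  - intros th hth. destruct (fromDefs _ _ _ _ (HG th hth)) as [exg Eg]. rewrite <- Eg.
    apply RInt_le_R; auto. pose proof PI_pos'; lra. apply ex3; auto.
Qed.

Lemma fluxint_of (h : R -> R -> R -> R) (H : R -> R -> R -> R -> R) a b :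
  a <= b -> jc4 H ->
  (forall th ph, ex_RInt (fun s => h s th ph) a b) ->
  (forall s th ph, a <= s <= b -> h s th ph * sin th = H 0 s th ph) ->
  FluxInt h a b (S2 (IVv a b H) 0 0 0 0).
Proof.
  intros hab HH Hex Heq.
  exists (fun th ph => RInt (fun s => h s th ph) a b). split.
  { intros th ph _ _. apply toDefs; auto. }
  assert (E1 : forall th ph, RInt (fun s => h s th ph) a b * sin th = IVv a b H 0 0 th ph).
  { intros th ph. rewrite Rmult_comm. rewrite <- RInt_scal_R; auto. unfold IVv. apply RInt_ext.
    intros s hs. rewrite Rmin_left in hs by exact hab. rewrite Rmax_right in hs by exact hab. rewrite Rmult_comm; apply Heq; lra. }
  exists (fun th => IPh (IVv a b H) 0 0 th 0). split.
  - intros th _. unfold IPh. rewrite <- (RInt_ext (fun ph => RInt (fun s => h s th ph) a b * sin th)).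
    + apply toDefs. eapply ex_RInt_ext. { intros; symmetry; apply E1. } apply ex3, jc4_IVv; auto.
    + intros; apply E1.
  - apply toDefs. apply (ex2 (IPh (IVv a b H)) 0 0 0 0 PI). apply jc4_IPh, jc4_IVv; auto.
Qed.

Lemma S2_le F G u v : jc4 F -> jc4 G ->
  (forall th ph, 0 <= th <= PI -> 0 <= ph <= 2 * PI -> F u v th ph <= G u v th ph) ->
  S2 F u v 0 0 <= S2 G u v 0 0.
Proof.
  intros HF HG Hle. unfold S2, ITh, IPh. apply RInt_le_R; auto using PI_pos'.
  - apply (ex2 (IPh F) u v 0 0 PI). apply jc4_IPh; auto.
  - apply (ex2 (IPh G) u v 0 0 PI). apply jc4_IPh; auto.
  - intros th hth. apply RInt_le_R; try (apply ex3; auto). pose proof PI_pos'; lra. auto.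
Qed.

Lemma S2_ge0 F u v : jc4 F ->
  (forall th ph, 0 <= th <= PI -> 0 <= ph <= 2 * PI -> 0 <= F u v th ph) -> 0 <= S2 F u v 0 0.
Proof.
  intros HF H. unfold S2, ITh, IPh. apply RInt_ge0_R; auto using PI_pos'.
  - apply (ex2 (IPh F) u v 0 0 PI). apply jc4_IPh; auto.
  - intros th hth. apply RInt_ge0_R; [pose proof PI_pos'; lra| apply ex3; auto| auto].
Qed.

Lemma IVv_le F G a b u th ph : a <= b -> jc4 F -> jc4 G ->
  (forall s, a <= s <= b -> F u s th ph <= G u s th ph) -> IVv a b F u 0 th ph <= IVv a b G u 0 th ph.
Proof. intros hab HF HG H. unfold IVv. apply RInt_le_R; auto; apply ex1; auto. Qed.

Lemma IVv_ge0 F a b u th ph : a <= b -> jc4 F ->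
  (forall s, a <= s <= b -> 0 <= F u s th ph) -> 0 <= IVv a b F u 0 th ph.
Proof. intros hab HF H. unfold IVv. apply RInt_ge0_R; auto; apply ex1; auto. Qed.

Lemma IUu_le F G a b v th ph : a <= b -> jc4 F -> jc4 G ->
  (forall s, a <= s <= b -> F s v th ph <= G s v th ph) -> IUu a b F 0 v th ph <= IUu a b G 0 v th ph.
Proof. intros hab HF HG H. unfold IUu. apply RInt_le_R; auto; apply ex0; auto. Qed.

Lemma S2_lin c (k : R -> R) F G u v : jc4 F -> jc4 G ->
  S2 (fun u v th ph => c * F u v th ph + k v * G u v th ph) u v 0 0 =
  c * S2 F u v 0 0 + k v * S2 G u v 0 0.
Proof.
  intros HF HG. unfold S2, ITh, IPh.
  rewrite <- (RInt_scal_R _ c) by (apply (ex2 (IPh F) u v 0 0 PI); apply jc4_IPh; auto).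
  rewrite <- (RInt_scal_R _ (k v)) by (apply (ex2 (IPh G) u v 0 0 PI); apply jc4_IPh; auto).
  rewrite <- RInt_plus_R.
  2: { eapply ex_RInt_ext; [intros; reflexivity|]. apply (ex_RInt_scal (V:=R_CompleteNormedModule)).
       apply (ex2 (IPh F) u v 0 0 PI); apply jc4_IPh; auto. }
  2: { apply (ex_RInt_scal (V:=R_CompleteNormedModule)). apply (ex2 (IPh G) u v 0 0 PI); apply jc4_IPh; auto. }
  apply RInt_ext. intros th _.
  rewrite <- (RInt_scal_R _ c) by (apply ex3; auto).
  rewrite <- (RInt_scal_R _ (k v)) by (apply ex3; auto).
  rewrite <- RInt_plus_R.
  - reflexivity.
  - apply (ex_RInt_scal (V:=R_CompleteNormedModule)). apply ex3; auto.
  - apply (ex_RInt_scal (V:=R_CompleteNormedModule)). apply ex3; auto.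
Qed.

Definition vpf (p v : R) : R := Rpower (Rmax v 1) p.

Lemma Rmax1_lip x y : Rabs (Rmax y 1 - Rmax x 1) <= Rabs (y - x).
Proof. unfold Rmax; repeat destruct Rle_dec; unfold Rabs; repeat destruct Rcase_abs; lra. Qed.

Lemma lnmax_cont x : continuity_pt (fun v => ln (Rmax v 1)) x.
Proof.
  apply eps_cpt. intros eps he.
  assert (hp : 0 < Rmax x 1) by (pose proof (Rmax_r x 1); lra).
  assert (C : continuity_pt ln (Rmax x 1)).
  { apply derivable_continuous_pt. exists (/ Rmax x 1). apply derivable_pt_lim_ln; auto. }
  destruct (cpt_eps _ _ C eps he) as [d [hd D]].
  exists d; split; auto. intros y hy. apply D. eapply Rle_lt_trans; [apply Rmax1_lip| auto].
Qed.

Lemma vpf_cont p x : continuity_pt (vpf p) x.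
Proof.
  unfold vpf, Rpower.
  apply (continuity_pt_comp (fun v => p * ln (Rmax v 1)) exp).
  - apply continuity_pt_mult; [apply continuity_pt_const; intros a b; auto| apply lnmax_cont].
  - apply derivable_continuous_pt, derivable_exp.
Qed.

Lemma jc4_vpf p : jc4 (fun _ v _ _ => vpf p v).
Proof. apply (jc4_fun1 (vpf p) (fun _ v _ _ => v)); [apply vpf_cont| apply jc4_p1]. Qed.

Lemma vpf_eq p v : 1 <= v -> vpf p v = Rpower v p.
Proof. intros h. unfold vpf. rewrite Rmax_left by lra. reflexivity. Qed.

Lemma vpf_ge1 p v : 0 <= p -> 1 <= vpf p v.
Proof.
  intros hp. unfold vpf. apply Rle_trans with (Rpower (Rmax v 1) 0).
  - rewrite Rpower_O by (pose proof (Rmax_r v 1); lra). lra.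
  - apply Rle_Rpower; auto. apply Rmax_r.
Qed.

Lemma ln_le_xm1 x : 0 < x -> ln x <= x - 1.
Proof.
  intros hx. destruct (Req_dec (ln x) 0) as [z|z].
  - rewrite z. assert (x = 1). { rewrite <- (exp_ln x hx), z. apply exp_0. } lra.
  - assert (H := exp_ineq1 (ln x) z). rewrite exp_ln in H; auto. lra.
Qed.

Lemma exp_le_mono x y : x <= y -> exp x <= exp y.
Proof. intros h; destruct (Req_dec x y) as [->|n]; [lra| left; apply exp_increasing; lra]. Qed.

Lemma vpf_exp p beta v : 0 < p -> 0 < beta ->
  vpf p v <= exp (p * (ln (p / beta) - 1)) * exp (beta * Rmax v 1).
Proof.
  intros hp hb. unfold vpf, Rpower. rewrite <- exp_plus. apply exp_le_mono.
  set (m := Rmax v 1). assert (hm : 0 < m) by (unfold m; pose proof (Rmax_r v 1); lra).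
  assert (H := ln_le_xm1 (beta * m / p) ltac:(apply Rdiv_lt_0_compat; nra)).
  unfold Rdiv in H. rewrite ln_mult in H by (try apply Rinv_0_lt_compat; nra).
  rewrite ln_mult in H by nra. rewrite ln_Rinv in H by lra.
  unfold Rdiv. rewrite ln_mult by (try apply Rinv_0_lt_compat; nra). rewrite ln_Rinv by lra.
  assert (E : beta * m * / p * p = beta * m) by (field; lra).
  assert (p * (ln beta + ln m + - ln p) <= p * (beta * m * / p - 1)) by (apply Rmult_le_compat_l; lra).
  nra.
Qed.

Lemma bulk_alg r Om P c1 b X Y : 0 < r -> 0 < Om -> 1 <= P -> Om / r <= c1 -> Om * P / r <= b ->
  Rabs (- (2 / r) * (P + 1) * X * Y) * (r ^ 2 * Om / 2) <= c1 * (P * X ^ 2 * r ^ 2) + b * (Y ^ 2 * r ^ 2).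
Proof.
  intros hr hO hP h1 h2.
  replace (- (2 / r) * (P + 1) * X * Y) with (- ((2 / r) * (P + 1)) * (X * Y)) by ring.
  rewrite Rabs_mult, Rabs_Ropp. rewrite (Rabs_pos_eq ((2/r)*(P+1))).
  2: { apply Rmult_le_pos; [apply Rlt_le, Rdiv_lt_0_compat|]; lra. }
  replace (2 / r * (P + 1) * Rabs (X * Y) * (r ^ 2 * Om / 2)) with (r * Om * (P + 1) * Rabs (X * Y)) by (field; lra).
  assert (hXY : 2 * Rabs (X * Y) <= X ^ 2 + Y ^ 2).
  { rewrite Rabs_mult. assert (Rabs X ^ 2 = X ^ 2) by (rewrite RPow_abs; apply Rabs_pos_eq, pow2_ge_0).
    assert (Rabs Y ^ 2 = Y ^ 2) by (rewrite RPow_abs; apply Rabs_pos_eq, pow2_ge_0).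
    pose proof (pow2_ge_0 (Rabs X - Rabs Y)). nra. }
  assert (hc1 : Om <= c1 * r) by (apply (Rmult_le_compat_r r) in h1; [|lra]; replace (Om / r * r) with Om in h1 by (field; lra); lra).
  assert (hb : Om * P <= b * r) by (apply (Rmult_le_compat_r r) in h2; [|lra]; replace (Om * P / r * r) with (Om * P) in h2 by (field; lra); lra).
  assert (A0 : 0 <= Rabs (X * Y)) by apply Rabs_pos.
  assert (E1 : r * Om * (P + 1) * Rabs (X * Y) <= r * Om * P * (X ^ 2 + Y ^ 2)).
  { assert (r * Om * (P + 1) * Rabs (X * Y) <= r * Om * P * (2 * Rabs (X * Y))).
    { assert (0 <= r * Om) by nra. assert (P + 1 <= 2 * P) by lra.
      replace (r * Om * P * (2 * Rabs (X * Y))) with (r * Om * (2 * P) * Rabs (X * Y)) by ring.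
      apply Rmult_le_compat_r; auto. apply Rmult_le_compat_l; auto. }
    assert (0 <= r * Om * P) by (apply Rmult_le_pos; nra).
    nra. }
  assert (E2 : r * Om * P * X ^ 2 <= c1 * (P * X ^ 2 * r ^ 2)).
  { assert (0 <= P * X ^ 2 * r) by (pose proof (pow2_ge_0 X); apply Rmult_le_pos; nra). nra. }
  assert (E3 : r * Om * P * Y ^ 2 <= b * (Y ^ 2 * r ^ 2)).
  { assert (0 <= Y ^ 2 * r) by (pose proof (pow2_ge_0 Y); nra). nra. }
  nra.
Qed.

Lemma fluxU_alg r Om P X T sn q : r <> 0 ->
  (P * X ^ 2 + Om / 4 * 1 * (/ r ^ 2 * (T ^ 2 + / sn ^ 2 * (sn * q) ^ 2))) * r ^ 2 * sn =
  (P * X ^ 2 * r ^ 2 + Om / 4 * (T ^ 2 + q ^ 2)) * sn.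
Proof.
  intros hr. destruct (Req_dec sn 0) as [->|hs]; [ring|]. field. split; auto.
Qed.

Lemma fluxV_alg r Om P X T sn q : r <> 0 ->
  (1 * X ^ 2 + Om / 4 * P * (/ r ^ 2 * (T ^ 2 + / sn ^ 2 * (sn * q) ^ 2))) * r ^ 2 * sn =
  (X ^ 2 * r ^ 2 + Om / 4 * P * (T ^ 2 + q ^ 2)) * sn.
Proof.
  intros hr. destruct (Req_dec sn 0) as [->|hs]; [ring|]. field. split; auto.
Qed.

Lemma exp_int C beta a b : 0 < C -> 0 < beta -> a <= b ->
  ex_RInt (fun v => C * exp (- beta * v)) a b /\
  RInt (fun v => C * exp (- beta * v)) a b <= C / beta * exp (- beta * a).
Proof.
  intros hC hb hab.
  assert (D : is_RInt (fun v => C * exp (- beta * v)) a b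
     (minus (- (C / beta) * exp (- beta * b)) (- (C / beta) * exp (- beta * a)))).
  { apply (is_RInt_derive (V:=R_CompleteNormedModule) (fun v => - (C / beta) * exp (- beta * v))).
    - intros x _. auto_derive; auto. field. lra.
    - intros x _. apply continuity_pt_filterlim.
      apply derivable_continuous_pt. exists (C * (exp (-beta * x) * (- beta))).
      apply is_derive_Reals. auto_derive; auto. ring. }
  split; [eexists; eauto|].
  rewrite (is_RInt_unique _ _ _ _ D). unfold minus, plus, opp; simpl.
  assert (0 < exp (- beta * b)) by apply exp_pos.
  assert (0 < C / beta) by (apply Rdiv_lt_0_compat; lra).
  nra.
Qed.

Theorem mainTheorem11
  (M e p : R) (Rf : R -> R) (rblue rsb beta alpha ucut vcut : R)
  (hMe : 0 < Rabs e < M)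
  (hR : RN_rfun M e Rf)
  (hp : 1 < p)
  (hrb : rminus M e < rblue < rplus M e)
  (hrbneg : forall r, rminus M e < r <= rblue -> M - e ^ 2 / r < 0)
  (hrsb : Rf rsb = rblue) (hrsb0 : 0 < rsb)
  (hbeta : 0 < beta)
  (hbeta2 : forall r, rminus M e < r <= rblue -> - (1 / (2 * r ^ 2) * (M - e ^ 2 / r)) >= beta)
  (ha1 : 1 < alpha) (ha2 : (p + 1) / beta < alpha)
  (ha3 : alpha * (2 - ln (2 * alpha)) > 2 * rsb + 1)
  (hvcut : 2 * alpha < vcut) (hucut : ucut = u_gamma alpha rsb vcut) :
  exists delta1 delta2 : R -> R,
    (forall eps, 0 < eps -> 0 < delta1 eps) /\
    (forall vs, 0 < delta2 vs) /\
    (forall eta, 0 < eta -> exists eps0, 0 < eps0 /\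
        forall eps, 0 < eps < eps0 -> delta1 eps < eta) /\
    (forall eta, 0 < eta -> exists V, forall vs, V <= vs -> delta2 vs < eta) /\
    forall (eps : R) (Phi : R -> R -> R -> R -> R -> R) (du dv dth dph : R -> R -> R -> R -> R)
           (vs vh u1 u2 : R),
      0 < eps ->
      smooth5 Phi -> partials Phi du dv dth dph ->
      vcut <= vs -> vs < vh -> ucut <= u1 -> 0 < u2 - u1 <= eps ->
      forall B1 B2 : R,
        (forall ub, u1 <= ub <= u2 -> forall F,
            FluxInt (fluxU_integrand M e p Rf du dv dth dph ub) vs vh F -> F <= B1) ->
        (forall vb, vs <= vb <= vh -> forall F,
            FluxInt (fluxV_integrand M e p Rf du dv dth dph vb) u1 u2 F -> F <= B2) ->
        forall I, RectInt (bulk_integrand M e p Rf du dv) u1 u2 vs vh I ->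
          I <= delta1 eps * B1 + delta2 vs * B2.
Proof.
  destruct (Rf_facts M e Rf hMe hR) as [P1 [P2 [P3 P4]]].
  set (rm := rminus M e).
  assert (hrm : 0 < rm) by (destruct (P1 0); auto).
  set (W0 := wf M e Rf rsb).
  assert (hW0 : 0 < W0) by apply P2.
  set (c1 := W0 / rm).
  assert (hc1 : 0 < c1) by (apply Rdiv_lt_0_compat; auto).
  set (Kp := exp (p * (ln (p / beta) - 1))).
  assert (hKp : 0 < Kp) by apply exp_pos.
  set (C2 := W0 * exp (4 * beta * rsb - 2 * beta * ucut) * Kp / rm).
  assert (hC2 : 0 < C2).
  { unfold C2. apply Rdiv_lt_0_compat; auto. pose proof (exp_pos (4 * beta * rsb - 2 * beta * ucut)).
    apply Rmult_lt_0_compat; auto. apply Rmult_lt_0_compat; auto. }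
  exists (fun eps => c1 * eps), (fun vs => C2 / beta * exp (- beta * vs)).
  split; [intros; apply Rmult_lt_0_compat; auto|].
  split; [intros; apply Rmult_lt_0_compat; [apply Rdiv_lt_0_compat; auto| apply exp_pos]|].
  split.
  { intros eta heta. exists (eta / c1). split; [apply Rdiv_lt_0_compat; auto|].
    intros eps [h1 h2]. apply (Rmult_lt_compat_l c1) in h2; auto.
    replace (c1 * (eta / c1)) with eta in h2 by (field; lra). lra. }
  split.
  { intros eta heta. set (q := eta * beta / C2).
    assert (hq : 0 < q) by (unfold q; apply Rdiv_lt_0_compat; nra).
    exists ((1 - ln q) / beta). intros vs hvs.
    assert (E : - beta * vs < ln q).
    { apply (Rmult_le_compat_l beta) in hvs; [|lra].
      replace (beta * ((1 - ln q) / beta)) with (1 - ln q) in hvs by (field; lra). lra. }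
    apply exp_increasing in E. rewrite exp_ln in E by auto.
    apply (Rmult_lt_compat_l (C2 / beta)) in E; [|apply Rdiv_lt_0_compat; auto].
    replace (C2 / beta * q) with eta in E by (unfold q; field; lra). lra. }
  intros eps Phi du dv dth dph vs vh u1 u2 heps Hs Hp hvs hvh hu1 hu12 B1 B2 HB1 HB2 I HI.
  destruct (dform Phi du dv dth dph Hs Hp) as [D0 [D1 [DTH [Q [J0 [J1 [JTH [JQ Deq]]]]]]]].
  assert (hln : 0 < ln vcut) by (rewrite <- ln_1; apply ln_increasing; lra).
  assert (Hreg : forall u v, ucut <= u -> vcut <= v -> rsb <= (u + v) / 2).
  { intros u v h1 h2. unfold u_gamma in hucut. assert (0 < alpha * ln vcut) by nra. lra. }
  assert (Hdec := wf_decay M e Rf rblue rsb beta hMe hR hbeta2 hrsb).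
  assert (Hwf1 : forall s, rsb <= s -> wf M e Rf s <= W0).
  { intros s hs. specialize (Hdec s hs). fold W0 in Hdec.
    assert (exp (4 * beta * rsb) <= exp (4 * beta * s)) by (apply exp_le_mono; nra).
    assert (0 < exp (4 * beta * rsb)) by apply exp_pos.
    assert (0 < wf M e Rf s) by apply P2. nra. }
  assert (Hwf2 : forall s, rsb <= s -> wf M e Rf s <= W0 * exp (4 * beta * rsb - 4 * beta * s)).
  { intros s hs. specialize (Hdec s hs). fold W0 in Hdec.
    assert (0 < exp (4 * beta * s)) by apply exp_pos.
    unfold Rminus. rewrite exp_plus, exp_Ropp.
    apply (Rmult_le_reg_r (exp (4 * beta * s))); auto.
    replace (W0 * (exp (4 * beta * rsb) * / exp (4 * beta * s)) * exp (4 * beta * s))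
      with (W0 * exp (4 * beta * rsb)) by (field; lra). lra. }
  pose (r4 := fun u v (_ _ : R) => Rf ((u + v) / 2)).
  pose (om4 := fun u v (_ _ : R) => wf M e Rf ((u + v) / 2)).
  assert (Jh : jc4 (fun u v (_ _ : R) => (u + v) / 2)) by (unfold Rdiv; jc).
  assert (Jr4 : jc4 r4) by (apply (jc4_fun1 Rf (fun u v _ _ => (u + v) / 2)); [intro; apply (Rf_cont M e); auto| auto]).
  assert (Jom4 : jc4 om4) by (apply (jc4_fun1 (wf M e Rf) (fun u v _ _ => (u + v) / 2)); [intro; apply (wf_cont M e); auto| auto]).
  assert (Jvp := jc4_vpf p).
  pose (A4 := fun u v th ph => vpf p v * D1 u v th ph ^ 2 * r4 u v th ph ^ 2 * sin th).
  pose (B4 := fun u v th ph => D0 u v th ph ^ 2 * r4 u v th ph ^ 2 * sin th).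
  pose (bb := fun v => C2 * exp (- beta * v)).
  pose (Cs := fun u v th ph => c1 * A4 u v th ph + bb v * B4 u v th ph).
  pose (HU := fun u v th ph => (vpf p v * D1 u v th ph ^ 2 * r4 u v th ph ^ 2
                 + om4 u v th ph / 4 * (DTH u v th ph ^ 2 + Q u v th ph ^ 2)) * sin th).
  pose (HV := fun u v th ph => (D0 u v th ph ^ 2 * r4 u v th ph ^ 2
                 + om4 u v th ph / 4 * vpf p v * (DTH u v th ph ^ 2 + Q u v th ph ^ 2)) * sin th).
  assert (JA : jc4 A4) by (unfold A4; jc).
  assert (JB : jc4 B4) by (unfold B4; jc).
  assert (Jbb : jc4 (fun _ v _ _ => bb v)) by (unfold bb; jc).
  assert (JC : jc4 Cs) by (unfold Cs; jc).
  assert (JHU : jc4 HU) by (unfold HU; unfold Rdiv; jc).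
  assert (JHV : jc4 HV) by (unfold HV; unfold Rdiv; jc).
  assert (hr4 : forall u v th ph, rm <= r4 u v th ph).
  { intros; unfold r4, rm. destruct (P1 ((u + v) / 2)); lra. }
  assert (hom4 : forall u v th ph, 0 < om4 u v th ph) by (intros; apply P2).
  assert (Hv1 : forall v, vs <= v -> 1 <= v) by (intros; lra).
  assert (Hpt : forall u v th ph, u1 <= u <= u2 -> vs <= v <= vh -> 0 <= th <= PI ->
     bulk_integrand M e p Rf du dv u v th ph * sin th <= Cs u v th ph).
  { intros u v th ph hu hv hth.
    assert (hs : rsb <= (u + v) / 2) by (apply Hreg; lra).
    assert (hsin : 0 <= sin th) by (apply sin_ge_0; lra).
    assert (hrp : 0 < r4 u v th ph) by (specialize (hr4 u v th ph); lra).
    assert (hrr : / r4 u v th ph <= / rm) by (apply Rinv_le_contravar; auto).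
    assert (hP : 1 <= vpf p v) by (apply vpf_ge1; lra).
    assert (hc : om4 u v th ph / r4 u v th ph <= c1).
    { unfold c1, Rdiv. apply Rmult_le_compat; try lra.
      - left; apply hom4.
      - left; apply Rinv_0_lt_compat; auto.
      - apply Hwf1; auto. }
    assert (hb : om4 u v th ph * vpf p v / r4 u v th ph <= bb v).
    { assert (E1 : om4 u v th ph <= W0 * exp (4 * beta * rsb - 4 * beta * ((u + v) / 2))) by (apply Hwf2; auto).
      assert (E2 : vpf p v <= Kp * exp (beta * v)).
      { assert (Hx := vpf_exp p beta v ltac:(lra) hbeta). rewrite Rmax_left in Hx by lra. exact Hx. }
      assert (E3 : exp (4 * beta * rsb - 4 * beta * ((u + v) / 2)) * exp (beta * v) <=
                   exp (4 * beta * rsb - 2 * beta * ucut) * exp (- beta * v)).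
      { rewrite <- !exp_plus. apply exp_le_mono. nra. }
      assert (E4 : om4 u v th ph * vpf p v <= W0 * exp (4 * beta * rsb - 2 * beta * ucut) * Kp * exp (- beta * v)).
      { apply Rle_trans with ((W0 * exp (4 * beta * rsb - 4 * beta * ((u + v) / 2))) * (Kp * exp (beta * v))).
        { apply Rmult_le_compat; auto; left; [apply hom4| lra]. }
        replace (W0 * exp (4 * beta * rsb - 4 * beta * ((u + v) / 2)) * (Kp * exp (beta * v)))
          with ((W0 * Kp) * (exp (4 * beta * rsb - 4 * beta * ((u + v) / 2)) * exp (beta * v))) by ring.
        replace (W0 * exp (4 * beta * rsb - 2 * beta * ucut) * Kp * exp (- beta * v))
          with ((W0 * Kp) * (exp (4 * beta * rsb - 2 * beta * ucut) * exp (- beta * v))) by ring.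
        apply Rmult_le_compat_l; auto. nra. }
      unfold bb, C2, Rdiv.
      apply Rle_trans with (W0 * exp (4 * beta * rsb - 2 * beta * ucut) * Kp * exp (- beta * v) * / rm).
      { apply Rmult_le_compat; auto.
        - assert (0 < om4 u v th ph) by apply hom4. assert (0 < vpf p v) by lra. nra.
        - left; apply Rinv_0_lt_compat; auto. }
      right; ring. }
    unfold bulk_integrand, KtildeW. rewrite (proj1 (Deq u v th ph)), (proj1 (proj2 (Deq u v th ph))).
    rewrite <- (vpf_eq p v) by lra.
    change (rr Rf u v) with (r4 u v th ph). change (Om2 M e Rf u v) with (om4 u v th ph).
    assert (K := bulk_alg (r4 u v th ph) (om4 u v th ph) (vpf p v) c1 (bb v) (D1 u v th ph) (D0 u v th ph)
                   hrp (hom4 u v th ph) hP hc hb).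
    unfold Cs, A4, B4.
    apply Rmult_le_compat_r with (r := sin th) in K; auto.
    replace (c1 * (vpf p v * D1 u v th ph ^ 2 * r4 u v th ph ^ 2 * sin th) +
             bb v * (D0 u v th ph ^ 2 * r4 u v th ph ^ 2 * sin th)) with
      ((c1 * (vpf p v * D1 u v th ph ^ 2 * r4 u v th ph ^ 2) + bb v * (D0 u v th ph ^ 2 * r4 u v th ph ^ 2)) * sin th)
      by ring.
    exact K. }
  assert (hr0 : forall u v th ph, r4 u v th ph <> 0) by (intros; specialize (hr4 u v th ph); lra).
  assert (FU : forall ub, u1 <= ub <= u2 -> FluxInt (fluxU_integrand M e p Rf du dv dth dph ub) vs vh
             (S2 (IVv vs vh (fun _ s th ph => HU ub s th ph)) 0 0 0 0)).
  { intros ub hub. apply fluxint_of; [lra| apply (jc4_comp HU (fun _ _ _ _ => ub)); auto using jc4_const, jc4_p1, jc4_p2, jc4_p3 | |].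
    - intros th ph. set (k := / (sin th) ^ 2).
      apply (ex_RInt_ext (V:=R_CompleteNormedModule) (fun s => vpf p s * D1 ub s th ph ^ 2 * r4 ub s th ph ^ 2
            + om4 ub s th ph / 4 * (DTH ub s th ph ^ 2 + k * (sin th * Q ub s th ph) ^ 2))).
      + intros s hs. rewrite Rmin_left in hs by lra. rewrite Rmax_right in hs by lra.
        unfold fluxU_integrand, angGrad2.
        destruct (Deq ub s th ph) as [_ [E1 [E2 E3]]]. rewrite E1, E2, E3.
        rewrite <- (vpf_eq p s) by lra. fold k.
        change (rr Rf ub s) with (r4 ub s th ph). change (Om2 M e Rf ub s) with (om4 ub s th ph).
        assert (hh := hr0 ub s th ph). clearbody r4 om4. simpl. field. auto.
      + apply (ex1 (fun _ s _ _ => vpf p s * D1 ub s th ph ^ 2 * r4 ub s th ph ^ 2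
            + om4 ub s th ph / 4 * (DTH ub s th ph ^ 2 + k * (sin th * Q ub s th ph) ^ 2)) 0 0 0).
        unfold Rdiv; jc2.
    - intros s th ph hs. unfold fluxU_integrand, angGrad2, HU.
      destruct (Deq ub s th ph) as [_ [E1 [E2 E3]]]. rewrite E1, E2, E3.
      rewrite <- (vpf_eq p s) by lra.
      change (rr Rf ub s) with (r4 ub s th ph). change (Om2 M e Rf ub s) with (om4 ub s th ph).
      apply fluxU_alg; auto. }
  assert (FV : forall vb, vs <= vb <= vh -> FluxInt (fluxV_integrand M e p Rf du dv dth dph vb) u1 u2
             (S2 (IVv u1 u2 (fun _ s th ph => HV s vb th ph)) 0 0 0 0)).
  { intros vb hvb. apply fluxint_of; [lra| apply (jc4_comp HV (fun _ s _ _ => s) (fun _ _ _ _ => vb)); auto using jc4_const, jc4_p1, jc4_p2, jc4_p3 | |].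
    - intros th ph. set (k := / (sin th) ^ 2).
      apply (ex_RInt_ext (V:=R_CompleteNormedModule) (fun s => D0 s vb th ph ^ 2 * r4 s vb th ph ^ 2
            + om4 s vb th ph / 4 * vpf p vb * (DTH s vb th ph ^ 2 + k * (sin th * Q s vb th ph) ^ 2))).
      + intros s hs.
        unfold fluxV_integrand, angGrad2.
        destruct (Deq s vb th ph) as [E0 [_ [E2 E3]]]. rewrite E0, E2, E3.
        rewrite <- (vpf_eq p vb) by lra. fold k.
        change (rr Rf s vb) with (r4 s vb th ph). change (Om2 M e Rf s vb) with (om4 s vb th ph).
        assert (hh := hr0 s vb th ph). clearbody r4 om4. simpl. field. auto.
      + apply (ex0 (fun s _ _ _ => D0 s vb th ph ^ 2 * r4 s vb th ph ^ 2
            + om4 s vb th ph / 4 * vpf p vb * (DTH s vb th ph ^ 2 + k * (sin th * Q s vb th ph) ^ 2)) 0 0 0).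
        unfold Rdiv; jc2.
    - intros s th ph hs. unfold fluxV_integrand, angGrad2, HV.
      destruct (Deq s vb th ph) as [E0 [_ [E2 E3]]]. rewrite E0, E2, E3.
      rewrite <- (vpf_eq p vb) by lra.
      change (rr Rf s vb) with (r4 s vb th ph). change (Om2 M e Rf s vb) with (om4 s vb th ph).
      apply fluxV_alg; auto. }
  assert (HUnn : forall u v th ph, 0 <= th <= PI -> 0 <= HU u v th ph).
  { intros u v th ph hth. unfold HU. apply Rmult_le_pos; [|apply sin_ge_0; lra].
    assert (0 < vpf p v) by (pose proof (vpf_ge1 p v ltac:(lra)); lra).
    assert (0 < om4 u v th ph) by apply hom4.
    pose proof (pow2_ge_0 (D1 u v th ph)). pose proof (pow2_ge_0 (r4 u v th ph)).
    pose proof (pow2_ge_0 (DTH u v th ph)). pose proof (pow2_ge_0 (Q u v th ph)).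
    apply Rplus_le_le_0_compat; [apply Rmult_le_pos; [apply Rmult_le_pos|]; lra|].
    apply Rmult_le_pos; lra. }
  assert (HVnn : forall u v th ph, 0 <= th <= PI -> 0 <= HV u v th ph).
  { intros u v th ph hth. unfold HV. apply Rmult_le_pos; [|apply sin_ge_0; lra].
    assert (0 < vpf p v) by (pose proof (vpf_ge1 p v ltac:(lra)); lra).
    assert (0 < om4 u v th ph) by apply hom4.
    pose proof (pow2_ge_0 (D0 u v th ph)). pose proof (pow2_ge_0 (r4 u v th ph)).
    pose proof (pow2_ge_0 (DTH u v th ph)). pose proof (pow2_ge_0 (Q u v th ph)).
    apply Rplus_le_le_0_compat; [apply Rmult_le_pos; lra|].
    apply Rmult_le_pos; [apply Rmult_le_pos|]; lra. }
  assert (hB1 : 0 <= B1).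
  { apply Rle_trans with (S2 (IVv vs vh (fun _ s th ph => HU u1 s th ph)) 0 0 0 0).
    - apply S2_ge0. { apply jc4_IVv. apply (jc4_comp HU (fun _ _ _ _ => u1)); auto using jc4_const, jc4_p1, jc4_p2, jc4_p3. }
      intros th ph hth hph. apply IVv_ge0; [lra| |].
      + apply (jc4_comp HU (fun _ _ _ _ => u1)); auto using jc4_const, jc4_p1, jc4_p2, jc4_p3.
      + intros; apply HUnn; auto.
    - apply (HB1 u1 ltac:(lra)). apply FU; lra. }
  assert (hB2 : 0 <= B2).
  { apply Rle_trans with (S2 (IVv u1 u2 (fun _ s th ph => HV s vs th ph)) 0 0 0 0).
    - apply S2_ge0. { apply jc4_IVv. apply (jc4_comp HV (fun _ s _ _ => s) (fun _ _ _ _ => vs)); auto using jc4_const, jc4_p1, jc4_p2, jc4_p3. }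
      intros th ph hth hph. apply IVv_ge0; [lra| |].
      + apply (jc4_comp HV (fun _ s _ _ => s) (fun _ _ _ _ => vs)); auto using jc4_const, jc4_p1, jc4_p2, jc4_p3.
      + intros; apply HVnn; auto.
    - apply (HB2 vs ltac:(lra)). apply FV; lra. }
  assert (JSA : jc4 (fun u v _ _ => S2 A4 u v 0 0)) by (apply slice01, jc4_S2; auto).
  assert (JSB : jc4 (fun u v _ _ => S2 B4 u v 0 0)) by (apply slice01, jc4_S2; auto).
  pose (TT4 := fun u v (_ _ : R) => bb v * S2 B4 u v 0 0).
  assert (JTT : jc4 TT4) by (unfold TT4; jc2).
  destruct HI as [G [HG HIG]].
  assert (Gle : forall u, u1 <= u <= u2 -> G u <= c1 * B1 + IVv vs vh TT4 u 0 0 0).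
  { intros u hu. destruct (HG u hu) as [K [HK HKI]]. destruct (fromDefs _ _ _ _ HKI) as [exK EK]. rewrite <- EK.
    apply Rle_trans with (RInt (fun v => S2 Cs u v 0 0) vs vh).
    { apply RInt_le_R; [lra|auto| apply (ex1 (S2 Cs) u 0 0); apply jc4_S2; auto |].
      intros v hv. apply (sph_le (bulk_integrand M e p Rf du dv u v) Cs u v (K v) JC); auto.
      all: try (intros th ph hth hph; apply Hpt; auto). }
    rewrite (RInt_ext (fun v => S2 Cs u v 0 0) (fun v => c1 * S2 A4 u v 0 0 + bb v * S2 B4 u v 0 0)).
    2: { intros v _. unfold Cs. apply (S2_lin c1 bb A4 B4 u v JA JB). }
    rewrite RInt_plus_R.
    2: { apply (ex1 (fun u v _ _ => c1 * S2 A4 u v 0 0) u 0 0). jc2. }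
    2: { apply (ex1 TT4 u 0 0). auto. }
    rewrite RInt_scal_R by (apply (ex1 (fun u v _ _ => S2 A4 u v 0 0) u 0 0); auto).
    apply Rplus_le_compat; [|right; reflexivity].
    apply Rmult_le_compat_l; [lra|].
    rewrite swap_S2_V by auto.
    apply Rle_trans with (S2 (IVv vs vh HU) u 0 0 0).
    { apply S2_le; try apply jc4_IVv; auto. intros th ph hth hph. apply IVv_le; auto; [lra|].
      intros s hs. unfold A4, HU.
      assert (0 <= om4 u s th ph / 4 * (DTH u s th ph ^ 2 + Q u s th ph ^ 2) * sin th).
      { apply Rmult_le_pos; [|apply sin_ge_0; lra]. pose proof (hom4 u s th ph).
        pose proof (pow2_ge_0 (DTH u s th ph)). pose proof (pow2_ge_0 (Q u s th ph)).
        apply Rmult_le_pos; lra. }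
      nra. }
    apply (HB1 u hu). exact (FU u hu). }
  destruct (fromDefs _ _ _ _ HIG) as [exG EG]. rewrite <- EG.
  assert (JIV := jc4_IVv vs vh TT4 JTT).
  assert (JIU := jc4_IUu u1 u2 TT4 JTT).
  apply Rle_trans with (RInt (fun u => c1 * B1 + IVv vs vh TT4 u 0 0 0) u1 u2).
  { apply RInt_le_R; [lra| auto | |intros; apply Gle; auto].
    apply (ex0 (fun u _ _ _ => c1 * B1 + IVv vs vh TT4 u 0 0 0) 0 0 0). jc2. }
  rewrite RInt_plus_R.
  2: { apply (ex0 (fun _ _ _ _ => c1 * B1) 0 0 0). apply jc4_const. }
  2: { apply (ex0 (IVv vs vh TT4) 0 0 0). auto. }
  replace (RInt (fun _ => c1 * B1) u1 u2) with ((u2 - u1) * (c1 * B1))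
    by (rewrite (RInt_const (V:=R_CompleteNormedModule)); reflexivity).
  assert (E1 : RInt (fun u => IVv vs vh TT4 u 0 0 0) u1 u2 =
               RInt (fun v => bb v * RInt (fun u => S2 B4 u v 0 0) u1 u2) vs vh).
  { unfold IVv. rewrite (fub2 (fun u v => TT4 u v 0 0)).
    2: { apply slice01; auto. }
    apply RInt_ext. intros v _. unfold TT4. apply RInt_scal_R.
    apply (ex0 (fun u v _ _ => S2 B4 u v 0 0) v 0 0); auto. }
  rewrite E1.
  assert (E2 : RInt (fun v => bb v * RInt (fun u => S2 B4 u v 0 0) u1 u2) vs vh <=
               RInt (fun v => bb v * B2) vs vh).
  { apply RInt_le_R; [lra| | |].
    - apply (ex_RInt_ext (V:=R_CompleteNormedModule) (fun v => RInt (fun u => TT4 u v 0 0) u1 u2)). { intros v _. unfold TT4. apply RInt_scal_R.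
        apply (ex0 (fun u v _ _ => S2 B4 u v 0 0) v 0 0); auto. }
      apply (ex1 (IUu u1 u2 TT4) 0 0 0); auto.
    - apply (ex1 (fun _ v _ _ => bb v * B2) 0 0 0). jc2.
    - intros v hv. apply Rmult_le_compat_l; [unfold bb; left; apply Rmult_lt_0_compat; [auto|apply exp_pos]|].
      rewrite swap_S2_U by auto.
      apply Rle_trans with (S2 (IUu u1 u2 HV) 0 v 0 0).
      { apply S2_le; try apply jc4_IUu; auto. intros th ph hth hph. apply IUu_le; auto; [lra|].
        intros s hs. unfold B4, HV.
        assert (0 <= om4 s v th ph / 4 * vpf p v * (DTH s v th ph ^ 2 + Q s v th ph ^ 2) * sin th).
        { apply Rmult_le_pos; [|apply sin_ge_0; lra]. pose proof (hom4 s v th ph).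
          pose proof (pow2_ge_0 (DTH s v th ph)). pose proof (pow2_ge_0 (Q s v th ph)).
          pose proof (vpf_ge1 p v ltac:(lra)).
          apply Rmult_le_pos; [apply Rmult_le_pos|]; lra. }
        nra. }
      apply Rle_trans with (S2 (IVv u1 u2 (fun _ s th ph => HV s v th ph)) 0 0 0 0); [right; reflexivity|].
      apply (HB2 v hv). exact (FV v hv). }
  destruct (exp_int C2 beta vs vh hC2 hbeta ltac:(lra)) as [exbb Hbb].
  assert (E3 : RInt (fun v => bb v * B2) vs vh = B2 * RInt (fun v => C2 * exp (- beta * v)) vs vh).
  { rewrite <- RInt_scal_R by auto. apply RInt_ext. intros; unfold bb; simpl; ring. }
  assert (E4 : B2 * RInt (fun v => C2 * exp (- beta * v)) vs vh <= C2 / beta * exp (- beta * vs) * B2).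
  { rewrite Rmult_comm. apply Rmult_le_compat_r; auto. }
  assert (E5 : (u2 - u1) * (c1 * B1) <= c1 * eps * B1).
  { assert (0 <= c1 * B1) by (apply Rmult_le_pos; lra). nra. }
  lra.
Qed.
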